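(* For any $V>0$ and any $f\in\mathcal F$, writing $R=m^2+n^2+p^2+mp+np$, $T=mn(m+p)(n+p)$ and summing over $(m,n,p)\in\mathbb Z^3\setminus\{0\}$, the second derivatives of $E_f$ at the FCC lattice $D_3$ (parameters $(u,v,x,y,z)=(1,1,0,1/2,1/2)$) are $\partial_{uu}^2E_f[D_3]=\frac{C^2}{2}\sum R^2f''(CR)+2C\sum Rf'(CR)+6C^2\sum Tf''(CR)$; $\partial_{vv}^2E_f[D_3]=\frac56C^2\sum R^2f''(CR)+\frac83C\sum Rf'(CR)+\frac{14}{3}C^2\sum Tf''(CR)$; $\partial_{xx}^2E_f[D_3]=\frac{C^2}{3}\sum R^2f''(CR)+C\sum Rf'(CR)+\frac43C^2\sum Tf''(CR)$; $\partial_{yy}^2E_f[D_3]=\partial_{zz}^2E_f[D_3]=\frac23C^2\sum R^2f''(CR)+\frac43C\sum Rf'(CR)-\frac83C^2\sum Tf''(CR)$; $\partial_{uv}^2E_f[D_3]=-\frac{C^2}{2}\sum R^2f''(CR)-2C\sum Rf'(CR)-6C^2\sum Tf''(CR)$; $\partial_{xy}^2E_f[D_3]=-\frac{C^2}{3}\sum R^2f''(CR)-\frac{2C}{3}\sum Rf'(CR)+\frac{4C^2}{3}\sum Tf''(CR)$; and $\partial^2_{ux},\partial^2_{uy},\partial^2_{uz},\partial^2_{vx},\partial^2_{vy},\partial^2_{vz},\partial^2_{xz},\partial^2_{yz}$ of $E_f$ at $D_3$ all vanish.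
   Context: Fix $V>0$ and set $C:=V^{2/3}2^{1/3}$. Every Bravais lattice $L\subset\mathbb R^3$ of covolume $V$ is parametrized by $(u,v,x,y,z)$ with $u,v>0$ so that its quadratic form is $Q_L(m,n,p)=\frac{C}{u}\big[(m+xn+yp)^2+v^2(n+zp)^2+\frac{u^3}{2v^2}p^2\big]$. Let $\mathcal F$ be the set of $f\in C^2((0,\infty))$ such that for each $k\in\{0,1,2\}$, $|f^{(k)}(r)|=O(r^{-3/2-k-\eta_k})$ as $r\to\infty$ for some $\eta_k>0$. For $f\in\mathcal F$, $E_f(u,v,x,y,z):=\sum_{(m,n,p)\in\mathbb Z^3\setminus\{0\}} f(Q_L(m,n,p))$, a function of the five variables at fixed $V$. The FCC lattice $D_3$ of volume $V$ has parameters $(1,1,0,1/2,1/2)$, for which $Q_L=CR$. *)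

(* Defs.v *)
From Stdlib Require Import Reals ZArith List.
From Coquelicot Require Import Coquelicot.
Open Scope R_scope.

Definition zrange (N : nat) : list Z :=
  map (fun k => (Z.of_nat k - Z.of_nat N)%Z) (seq 0 (2 * N + 1)).

Definition box_sum (g : Z -> Z -> Z -> R) (N : nat) : R :=
  fold_right Rplus 0
    (map (fun m =>
      fold_right Rplus 0
        (map (fun n =>
          fold_right Rplus 0
            (map (fun p =>
               if (Z.eqb m 0 && Z.eqb n 0 && Z.eqb p 0)%bool then 0
               else g m n p) (zrange N))) (zrange N))) (zrange N)).

(* Lattice sum over Z^3 \ {0}, as the limit of the box partial sums
   (these sums are absolutely convergent in the statement). *)
Definition lattice_sum (g : Z -> Z -> Z -> R) : R :=
  real (Lim_seq (box_sum g)).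

Definition Cvol (V : R) : R := Rpower V (2/3) * Rpower 2 (1/3).

(* Quadratic form of the lattice with parameters (u,v,x,y,z) at covolume V. *)
Definition QL (V u v x y z : R) (m n p : Z) : R :=
  let m' := IZR m in let n' := IZR n in let p' := IZR p in
  Cvol V / u * ((m' + x * n' + y * p') ^ 2 + v ^ 2 * (n' + z * p') ^ 2
               + u ^ 3 / (2 * v ^ 2) * p' ^ 2).

Definition decay (g : R -> R) (k : nat) : Prop :=
  exists eta M r0 : R, 0 < eta /\ 0 < r0 /\
    forall r, r0 <= r -> Rabs (g r) <= M * Rpower r (- (3/2 + INR k + eta)).

Definition in_F (f : R -> R) : Prop :=
  (forall r, 0 < r ->
     ex_derive f r /\ ex_derive (Derive f) r /\
     continuous (Derive (Derive f)) r) /\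
  decay f 0 /\ decay (Derive f) 1 /\ decay (Derive (Derive f)) 2.

(* E_f as a function of the five parameters, indexed 0..4 = u,v,x,y,z. *)
Definition Ef (V : R) (f : R -> R) (a : nat -> R) : R :=
  lattice_sum (fun m n p => f (QL V (a 0%nat) (a 1%nat) (a 2%nat) (a 3%nat) (a 4%nat) m n p)).

Definition upd (a : nat -> R) (i : nat) (t : R) : nat -> R :=
  fun k => if Nat.eqb k i then t else a k.

(* second_partial F a i j val : the function  t |-> (d/ds F)(a with coord i := t)
   (derivative in coordinate j) is differentiable in t at a i with derivative val,
   i.e. d_i d_j F (a) = val. *)
Definition second_partial (F : (nat -> R) -> R) (a : nat -> R) (i j : nat) (val : R) : Prop :=
  is_derive (fun t => let b := upd a i t in Derive (fun s => F (upd b j s)) (b j)) (a i) val.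

Definition D3pt : nat -> R :=
  fun k => match k with 0%nat => 1 | 1%nat => 1 | 2%nat => 0 | _ => 1/2 end.

Definition Rq (m n p : Z) : R :=
  let m' := IZR m in let n' := IZR n in let p' := IZR p in
  m' ^ 2 + n' ^ 2 + p' ^ 2 + m' * p' + n' * p'.

Definition Tq (m n p : Z) : R :=
  let m' := IZR m in let n' := IZR n in let p' := IZR p in
  m' * n' * (m' + p') * (n' + p').

(* Main.v *)
Require Import Defs.
From Coquelicot Require Import Coquelicot.
From Stdlib Require Import Reals ZArith List Lra Lia Psatz FunctionalExtensionality.
Import ListNotations.
Open Scope R_scope.

Fixpoint isum (lo : Z) (len : nat) (G : Z -> R) : R :=
  match len with O => 0 | S l => G lo + isum (lo + 1)%Z l G end.

Lemma isum_ext lo len F G :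
  (forall i, (lo <= i < lo + Z.of_nat len)%Z -> F i = G i) ->
  isum lo len F = isum lo len G.
Proof.
  revert lo; induction len as [|l IH]; intros lo H; simpl; [reflexivity|].
  rewrite (H lo) by lia. rewrite (IH (lo+1)%Z); [reflexivity|].
  intros i Hi; apply H; lia.
Qed.

Lemma isum_plus lo len F G :
  isum lo len (fun i => F i + G i) = isum lo len F + isum lo len G.
Proof. revert lo; induction len; intros lo; simpl; [lra|]. rewrite IHlen; lra. Qed.

Lemma isum_scal lo len c F :
  isum lo len (fun i => c * F i) = c * isum lo len F.
Proof. revert lo; induction len; intros lo; simpl; [lra|]. rewrite IHlen; lra. Qed.

Lemma isum_opp lo len F :
  isum lo len (fun i => - F i) = - isum lo len F.
Proof. revert lo; induction len; intros lo; simpl; [lra|]. rewrite IHlen; lra. Qed.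

Lemma isum_minus lo len F G :
  isum lo len (fun i => F i - G i) = isum lo len F - isum lo len G.
Proof. revert lo; induction len; intros lo; simpl; [lra|]. rewrite IHlen; lra. Qed.

Lemma isum_const lo len c : isum lo len (fun _ => c) = INR len * c.
Proof. revert lo; induction len; intros lo; simpl isum; [simpl; lra|]. rewrite IHlen, S_INR; lra. Qed.

Lemma isum_zero lo len : isum lo len (fun _ => 0) = 0.
Proof. rewrite isum_const; lra. Qed.

Lemma isum_split lo l1 l2 G :
  isum lo (l1 + l2) G = isum lo l1 G + isum (lo + Z.of_nat l1) l2 G.
Proof.
  revert lo; induction l1 as [|l IH]; intros lo; simpl.
  - rewrite Z.add_0_r; lra.
  - rewrite IH. replace (lo + 1 + Z.of_nat l)%Z with (lo + Z.pos (Pos.of_succ_nat l))%Z by lia. lra.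
Qed.

Lemma isum_last lo len G : isum lo (S len) G = isum lo len G + G (lo + Z.of_nat len)%Z.
Proof. replace (S len) with (len + 1)%nat by lia. rewrite isum_split; simpl; lra. Qed.

Lemma isum_le lo len F G :
  (forall i, (lo <= i < lo + Z.of_nat len)%Z -> F i <= G i) ->
  isum lo len F <= isum lo len G.
Proof.
  revert lo; induction len as [|l IH]; intros lo H; simpl; [lra|].
  assert (F lo <= G lo) by (apply H; lia).
  assert (isum (lo+1) l F <= isum (lo+1) l G) by (apply IH; intros; apply H; lia). lra.
Qed.

Lemma isum_nonneg lo len F :
  (forall i, (lo <= i < lo + Z.of_nat len)%Z -> 0 <= F i) -> 0 <= isum lo len F.
Proof. intros H. rewrite <- (isum_zero lo len). apply isum_le; auto. Qed.

Lemma isum_abs lo len F : Rabs (isum lo len F) <= isum lo len (fun i => Rabs (F i)).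
Proof.
  revert lo; induction len; intros lo; simpl. rewrite Rabs_R0; lra.
  eapply Rle_trans; [apply Rabs_triang|]. specialize (IHlen (lo+1)%Z). lra.
Qed.

Lemma isum_shift lo len a G :
  isum lo len (fun i => G (i + a)%Z) = isum (lo + a) len G.
Proof.
  revert lo; induction len; intros lo; simpl; [lra|]. rewrite IHlen.
  replace (lo + 1 + a)%Z with (lo + a + 1)%Z by lia. reflexivity.
Qed.

Lemma isum_refl lo len G :
  isum lo len (fun i => G (- i)%Z) = isum (- (lo + Z.of_nat len - 1)) len G.
Proof.
  revert lo; induction len as [|l IH]; intros lo; [reflexivity|].
  rewrite (isum_last _ l G). cbn [isum]. rewrite IH.
  replace (- (lo + 1 + Z.of_nat l - 1))%Z with (- (lo + Z.of_nat (S l) - 1))%Z by lia.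
  replace (- (lo + Z.of_nat (S l) - 1) + Z.of_nat l)%Z with (- lo)%Z by lia. lra.
Qed.

Lemma isum_swap lo1 len1 lo2 len2 F :
  isum lo1 len1 (fun a => isum lo2 len2 (fun b => F a b)) =
  isum lo2 len2 (fun b => isum lo1 len1 (fun a => F a b)).
Proof.
  revert lo1; induction len1; intros lo1; simpl.
  - symmetry; apply isum_zero.
  - rewrite IHlen1, <- isum_plus; reflexivity.
Qed.

Lemma isum_window lo len lo' len' G :
  (lo <= lo')%Z -> (lo' + Z.of_nat len' <= lo + Z.of_nat len)%Z ->
  isum lo len (fun i => if ((lo' <=? i) && (i <? lo' + Z.of_nat len'))%Z%bool then G i else 0)
  = isum lo' len' G.
Proof.
  intros H1 H2.
  set (l1 := Z.to_nat (lo' - lo)).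
  set (l3 := (len - l1 - len')%nat).
  replace len with (l1 + (len' + l3))%nat by lia.
  rewrite !isum_split.
  rewrite (isum_ext lo l1 _ (fun _ => 0)).
  2:{ intros i Hi. replace ((lo' <=? i)%Z) with false by (symmetry; apply Z.leb_gt; lia). reflexivity. }
  replace (lo + Z.of_nat l1)%Z with lo' by lia.
  rewrite (isum_ext lo' len' _ G).
  2:{ intros i Hi. replace ((lo' <=? i)%Z) with true by (symmetry; apply Z.leb_le; lia).
      replace ((i <? lo' + Z.of_nat len')%Z) with true by (symmetry; apply Z.ltb_lt; lia). reflexivity. }
  rewrite (isum_ext (lo' + Z.of_nat len') l3 _ (fun _ => 0)).
  2:{ intros i Hi. replace ((i <? lo' + Z.of_nat len')%Z) with false by (symmetry; apply Z.ltb_ge; lia).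
      rewrite Bool.andb_false_r. reflexivity. }
  rewrite !isum_zero. lra.
Qed.

Definition zsum (N : nat) (h : Z -> R) : R := isum (- Z.of_nat N) (2 * N + 1) h.

Lemma fold_seq h c s l :
  fold_right Rplus 0 (map h (map (fun k => (Z.of_nat k - c)%Z) (seq s l))) =
  isum (Z.of_nat s - c) l h.
Proof.
  revert s; induction l; intros s; simpl; [reflexivity|].
  rewrite IHl. f_equal. f_equal. lia.
Qed.

Lemma fold_zr N h : fold_right Rplus 0 (map h (zrange N)) = zsum N h.
Proof. unfold zrange, zsum. rewrite fold_seq. f_equal. Qed.

Definition cube (h : Z -> Z -> Z -> R) (N : nat) : R :=
  zsum N (fun m => zsum N (fun n => zsum N (fun p => h m n p))).

Definition z0 (g : Z -> Z -> Z -> R) : Z -> Z -> Z -> R :=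
  fun m n p => if (Z.eqb m 0 && Z.eqb n 0 && Z.eqb p 0)%bool then 0 else g m n p.

Lemma box_cube g N : box_sum g N = cube (z0 g) N.
Proof.
  unfold box_sum, cube. rewrite fold_zr. apply isum_ext; intros m _.
  rewrite fold_zr. apply isum_ext; intros n _. rewrite fold_zr. reflexivity.
Qed.

Lemma zsum_ext N F G : (forall i, (Z.abs i <= Z.of_nat N)%Z -> F i = G i) -> zsum N F = zsum N G.
Proof. intros H; apply isum_ext; intros; apply H; lia. Qed.

Lemma zsum_le N F G : (forall i, (Z.abs i <= Z.of_nat N)%Z -> F i <= G i) -> zsum N F <= zsum N G.
Proof. intros H; apply isum_le; intros; apply H; lia. Qed.

Lemma cube_ext N F G : (forall m n p, (Z.abs m <= Z.of_nat N)%Z -> (Z.abs n <= Z.of_nat N)%Z ->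
   (Z.abs p <= Z.of_nat N)%Z -> F m n p = G m n p) -> cube F N = cube G N.
Proof. intros H; unfold cube. apply zsum_ext; intros. apply zsum_ext; intros. apply zsum_ext; intros. auto. Qed.

Lemma cube_le N F G : (forall m n p, (Z.abs m <= Z.of_nat N)%Z -> (Z.abs n <= Z.of_nat N)%Z ->
   (Z.abs p <= Z.of_nat N)%Z -> F m n p <= G m n p) -> cube F N <= cube G N.
Proof. intros H; unfold cube. apply zsum_le; intros. apply zsum_le; intros. apply zsum_le; intros. auto. Qed.

Lemma cube_plus N F G : cube (fun m n p => F m n p + G m n p) N = cube F N + cube G N.
Proof.
  unfold cube, zsum. rewrite <- isum_plus. apply isum_ext; intros.
  rewrite <- isum_plus. apply isum_ext; intros. rewrite <- isum_plus. reflexivity.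
Qed.

Lemma cube_scal N c F : cube (fun m n p => c * F m n p) N = c * cube F N.
Proof.
  unfold cube, zsum. rewrite <- isum_scal. apply isum_ext; intros.
  rewrite <- isum_scal. apply isum_ext; intros. rewrite <- isum_scal. reflexivity.
Qed.

Lemma cube_minus N F G : cube (fun m n p => F m n p - G m n p) N = cube F N - cube G N.
Proof.
  unfold cube, zsum. rewrite <- isum_minus. apply isum_ext; intros.
  rewrite <- isum_minus. apply isum_ext; intros. rewrite <- isum_minus. reflexivity.
Qed.

Lemma cube_abs N F : Rabs (cube F N) <= cube (fun m n p => Rabs (F m n p)) N.
Proof.
  unfold cube, zsum. eapply Rle_trans; [apply isum_abs|]. apply isum_le; intros.
  eapply Rle_trans; [apply isum_abs|]. apply isum_le; intros. apply isum_abs.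
Qed.

Lemma cube_nonneg N F : (forall m n p, 0 <= F m n p) -> 0 <= cube F N.
Proof. intros H. unfold cube, zsum. apply isum_nonneg; intros. apply isum_nonneg; intros.
  apply isum_nonneg; intros. auto. Qed.

Lemma cube_const N c : cube (fun _ _ _ => c) N = (INR (2 * N + 1)) ^ 3 * c.
Proof.
  unfold cube, zsum. rewrite (isum_ext _ _ _ (fun _ => INR (2*N+1) ^ 2 * c)).
  - rewrite isum_const; ring.
  - intros. rewrite (isum_ext _ _ _ (fun _ => INR (2*N+1) * c)).
    + rewrite isum_const; ring.
    + intros. rewrite isum_const; ring.
Qed.

Definition inb (N : nat) (i : Z) : bool := (Z.abs i <=? Z.of_nat N)%Z.
Definition inc (N : nat) (m n p : Z) : bool := (inb N m && inb N n && inb N p)%bool.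

Lemma zsum_restrict N M G : (N <= M)%nat ->
  zsum M (fun i => if inb N i then G i else 0) = zsum N G.
Proof.
  intros H. unfold zsum. rewrite <- (isum_window (- Z.of_nat M) (2*M+1) (- Z.of_nat N) (2*N+1)) by lia.
  apply isum_ext; intros i Hi. unfold inb.
  destruct (Z.abs i <=? Z.of_nat N)%Z eqn:E.
  - apply Z.leb_le in E. replace ((- Z.of_nat N <=? i) && (i <? - Z.of_nat N + Z.of_nat (2 * N + 1)))%Z%bool with true; [reflexivity|].
    symmetry. apply andb_true_intro; split; [apply Z.leb_le|apply Z.ltb_lt]; lia.
  - apply Z.leb_gt in E. destruct (Z.le_gt_cases 0 i).
    + replace ((i <? - Z.of_nat N + Z.of_nat (2 * N + 1)))%Z with false by (symmetry; apply Z.ltb_ge; lia).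
      rewrite Bool.andb_false_r; reflexivity.
    + replace ((- Z.of_nat N <=? i))%Z with false by (symmetry; apply Z.leb_gt; lia). reflexivity.
Qed.

Lemma cube_restrict N M h : (N <= M)%nat ->
  cube (fun m n p => if inc N m n p then h m n p else 0) M = cube h N.
Proof.
  intros H. unfold cube. rewrite <- (zsum_restrict N M) by exact H.
  apply zsum_ext; intros m _. unfold inc. destruct (inb N m); simpl.
  2:{ unfold zsum; rewrite (isum_ext _ _ _ (fun _ => 0)); [apply isum_zero|].
      intros; apply isum_zero. }
  rewrite <- (zsum_restrict N M) by exact H.
  apply zsum_ext; intros n _. destruct (inb N n); simpl.
  2:{ unfold zsum; apply isum_zero. }
  rewrite <- (zsum_restrict N M) by exact H. reflexivity.
Qed.

Lemma inb_range N i : (Z.abs i <= Z.of_nat N)%Z -> inb N i = true.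
Proof. intros; unfold inb; apply Z.leb_le; lia. Qed.

Lemma shell_bound h N B : 0 <= B ->
  (forall m n p, inc (S N) m n p = true -> inc N m n p = false -> Rabs (h m n p) <= B) ->
  Rabs (cube h (S N) - cube h N) <= B * (INR (2 * S N + 1) ^ 3 - INR (2 * N + 1) ^ 3).
Proof.
  intros HB H.
  rewrite <- (cube_restrict N (S N) h) by lia. rewrite <- cube_minus.
  eapply Rle_trans; [apply cube_abs|].
  apply Rle_trans with (cube (fun m n p => B - (if inc N m n p then B else 0)) (S N)).
  - apply cube_le; intros m n p Hm Hn Hp.
    assert (inc (S N) m n p = true) by (unfold inc; rewrite !inb_range by lia; reflexivity).
    destruct (inc N m n p) eqn:E.
    + replace (h m n p - h m n p) with 0 by ring. rewrite Rabs_R0; lra.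
    + replace (h m n p - 0) with (h m n p) by ring. replace (B - 0) with B by ring. auto.
  - rewrite cube_minus, cube_restrict by lia. rewrite !cube_const. lra.
Qed.

Definition nrmZ (m n p : Z) : Z := Z.max (Z.abs m) (Z.max (Z.abs n) (Z.abs p)).
Definition nrm (m n p : Z) : R := IZR (nrmZ m n p).

Definition TD (g : Z -> Z -> Z -> R) (c d : R) (N0 : nat) : Prop :=
  0 <= c /\ 0 < d /\ (1 <= N0)%nat /\
  forall m n p, (Z.of_nat N0 <= nrmZ m n p)%Z -> Rabs (g m n p) <= c * Rpower (nrm m n p) (- (3 + d)).

Lemma ln_le_minus1 y : 0 < y -> ln y <= y - 1.
Proof. intros Hy. pose proof (exp_ineq1_le (ln y)). rewrite exp_ln in H by lra. lra. Qed.

Lemma key_ineq x d : 1 <= x -> 0 < d ->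
  d * Rpower (x + 1) (- (1 + d)) <= Rpower x (- d) - Rpower (x + 1) (- d).
Proof.
  intros Hx Hd. unfold Rpower.
  set (a := ln x). set (b := ln (x + 1)).
  replace (- (1 + d) * b) with (- d * b + - b) by ring. rewrite exp_plus.
  assert (Eb : exp (- b) = / (x + 1)). { unfold b. rewrite <- ln_Rinv by lra. rewrite exp_ln; [reflexivity|].
    apply Rinv_0_lt_compat; lra. }
  rewrite Eb.
  assert (Hba : / (x + 1) <= b - a).
  { unfold a, b. pose proof (ln_le_minus1 (x / (x + 1))).
    assert (0 < x / (x+1)) by (apply Rdiv_lt_0_compat; lra).
    specialize (H H0). unfold Rdiv in H. rewrite ln_mult in H by (try lra; apply Rinv_0_lt_compat; lra).
    rewrite ln_Rinv in H by lra.
    assert (x * / (x + 1) - 1 = - / (x + 1)) by (field; lra). lra. }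
  assert (He : 1 + d * (b - a) <= exp (d * (b - a))) by apply exp_ineq1_le.
  assert (exp (- d * a) = exp (- d * b) * exp (d * (b - a))).
  { rewrite <- exp_plus. f_equal. ring. }
  rewrite H.
  assert (0 < exp (- d * b)) by apply exp_pos.
  assert (d * / (x + 1) <= d * (b - a)) by (apply Rmult_le_compat_l; lra).
  nra.
Qed.

Lemma INR_pos_S N : 0 < INR (S N).
Proof. apply lt_0_INR; lia. Qed.

Lemma shell_TD h c d N0 N : TD h c d N0 -> (N0 <= S N)%nat ->
  Rabs (cube h (S N) - cube h N) <= 26 * c * Rpower (INR (S N)) (- (1 + d)).
Proof.
  intros [Hc [Hd [HN0 H]]] HN.
  set (x := INR (S N)).
  assert (Hx : 1 <= x) by (unfold x; rewrite S_INR; pose proof (pos_INR N); lra).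
  eapply Rle_trans.
  - apply (shell_bound h N (c * Rpower x (- (3 + d)))).
    + apply Rmult_le_pos; [lra|]. unfold Rpower; left; apply exp_pos.
    + intros m n p H1 H2.
      assert (E : nrmZ m n p = Z.of_nat (S N)).
      { unfold inc, inb in H1, H2. unfold nrmZ.
        repeat rewrite Bool.andb_true_iff in H1. destruct H1 as [[H1a H1b] H1c].
        apply Z.leb_le in H1a, H1b, H1c.
        destruct (Z.abs m <=? Z.of_nat N)%Z eqn:E1; destruct (Z.abs n <=? Z.of_nat N)%Z eqn:E2;
        destruct (Z.abs p <=? Z.of_nat N)%Z eqn:E3; simpl in H2; try discriminate;
        rewrite ?Z.leb_le, ?Z.leb_gt in E1, E2, E3; lia. }
      specialize (H m n p). rewrite E in H. unfold nrm in H. rewrite E in H.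
      rewrite <- INR_IZR_INZ in H. apply H. lia.
  - replace (INR (2 * S N + 1) ^ 3 - INR (2 * N + 1) ^ 3) with (24 * x ^ 2 + 2).
    2:{ unfold x. rewrite !plus_INR, !mult_INR, !S_INR. simpl. ring. }
    assert (Hx2 : Rpower x (- (3 + d)) * x ^ 2 = Rpower x (- (1 + d))).
    { rewrite <- (Rpower_pow 2 x) by lra. rewrite <- Rpower_plus. f_equal. simpl. ring. }
    assert (0 <= Rpower x (- (3 + d))) by (unfold Rpower; left; apply exp_pos).
    assert (24 * x ^ 2 + 2 <= 26 * x ^ 2) by nra.
    apply Rle_trans with (c * Rpower x (- (3 + d)) * (26 * x ^ 2)).
    + apply Rmult_le_compat_l; [apply Rmult_le_pos; lra|lra].
    + rewrite <- Hx2. lra.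
Qed.

Lemma tail_TD h c d N0 N M : TD h c d N0 -> (N0 <= N)%nat -> (N <= M)%nat ->
  Rabs (cube h M - cube h N) <= 26 * c / d * (Rpower (INR N) (- d) - Rpower (INR M) (- d)).
Proof.
  intros HT HN HM. pose proof HT as [Hc [Hd [HN0 _]]].
  induction HM.
  - replace (cube h N - cube h N) with 0 by ring. rewrite Rabs_R0, Rminus_diag, Rmult_0_r. lra.
  - eapply Rle_trans; [|].
    + replace (cube h (S m) - cube h N) with ((cube h (S m) - cube h m) + (cube h m - cube h N)) by ring.
      apply Rabs_triang.
    + pose proof (shell_TD h c d N0 m HT ltac:(lia)).
      assert (Hm1 : 1 <= INR m) by (apply (le_INR 1); lia).
      pose proof (key_ineq (INR m) d Hm1 Hd). rewrite <- S_INR in H0.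
      assert (26 * c / d * (Rpower (INR m) (- d) - Rpower (INR (S m)) (- d)) >= 26 * c * Rpower (INR (S m)) (- (1 + d))).
      { unfold Rdiv. apply Rle_ge.
        replace (26 * c * / d * (Rpower (INR m) (- d) - Rpower (INR (S m)) (- d))) with
          (26 * c * / d * (Rpower (INR m) (- d) - Rpower (INR (S m)) (- d))) by ring.
        apply Rle_trans with (26 * c * / d * (d * Rpower (INR (S m)) (- (1 + d)))).
        - right. field. lra.
        - apply Rmult_le_compat_l; [|lra]. apply Rmult_le_pos; [lra|]. left; apply Rinv_0_lt_compat; lra. }
      lra.
Qed.

Lemma tail_TD' h c d N0 N M : TD h c d N0 -> (N0 <= N)%nat -> (N <= M)%nat ->
  Rabs (cube h M - cube h N) <= 26 * c / d * Rpower (INR N) (- d).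
Proof.
  intros HT HN HM. eapply Rle_trans; [apply (tail_TD h c d N0 N M HT HN HM)|].
  destruct HT as [Hc [Hd _]].
  assert (0 <= Rpower (INR M) (- d)) by (unfold Rpower; left; apply exp_pos).
  assert (0 <= 26 * c / d) by (unfold Rdiv; apply Rmult_le_pos; [lra|left; apply Rinv_0_lt_compat; lra]).
  nra.
Qed.

Lemma TD_z0 g c d N0 : TD g c d N0 -> TD (z0 g) c d N0.
Proof.
  intros [Hc [Hd [HN H]]]. split; [|split; [|split]]; auto.
  intros m n p Hmnp. unfold z0.
  destruct (Z.eqb m 0 && Z.eqb n 0 && Z.eqb p 0)%bool eqn:E.
  - repeat rewrite Bool.andb_true_iff in E. destruct E as [[E1 E2] E3].
    apply Z.eqb_eq in E1, E2, E3. subst. unfold nrmZ in Hmnp. simpl in Hmnp. lia.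
  - auto.
Qed.

Lemma Rpower_small d eps : 0 < d -> 0 < eps ->
  exists N : nat, (1 <= N)%nat /\ forall n, (N <= n)%nat -> Rpower (INR n) (- d) < eps.
Proof.
  intros Hd He.
  set (y := exp (- ln eps / d)).
  destruct (archimed y) as [Hu _].
  assert (Hy : 0 < y) by apply exp_pos.
  exists (S (Z.to_nat (up y))). split; [lia|]. intros n Hn.
  assert (Hn' : y < INR n).
  { apply Rlt_le_trans with (IZR (up y)); [lra|].
    apply Rle_trans with (INR (S (Z.to_nat (up y)))); [|apply le_INR; lia].
    rewrite S_INR, INR_IZR_INZ, Z2Nat.id.
    - lra.
    - apply le_IZR. lra. }
  unfold Rpower. apply ln_increasing in Hn'; [|lra].
  unfold y in Hn'. rewrite ln_exp in Hn'.
  assert (- d * ln (INR n) < ln eps).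
  { unfold Rdiv in Hn'. 
    assert (- ln eps < d * ln (INR n)).
    { apply Rmult_lt_compat_l with (r := d) in Hn'; [|lra].
      replace (d * (- ln eps * / d)) with (- ln eps) in Hn' by (field; lra). lra. }
    lra. }
  apply exp_increasing in H. rewrite exp_ln in H by lra. exact H.
Qed.

Lemma TD_conv g c d N0 : TD g c d N0 ->
  is_lim_seq (box_sum g) (lattice_sum g) /\
  forall N, (N0 <= N)%nat -> Rabs (lattice_sum g - box_sum g N) <= 26 * c / d * Rpower (INR N) (- d).
Proof.
  intros HT. pose proof (TD_z0 g c d N0 HT) as HT0.
  pose proof HT as [Hc [Hd [HN _]]].
  assert (Htail : forall N M, (N0 <= N)%nat -> (N <= M)%nat ->
     Rabs (box_sum g M - box_sum g N) <= 26 * c / d * Rpower (INR N) (- d)).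
  { intros N M H1 H2. rewrite !box_cube. apply (tail_TD' _ c d N0); auto. }
  assert (HK : 0 <= 26 * c / d) by (unfold Rdiv; apply Rmult_le_pos; [lra|left; apply Rinv_0_lt_compat; lra]).
  assert (Hex : ex_finite_lim_seq (box_sum g)).
  { apply ex_lim_seq_cauchy_corr. intros eps.
    destruct (Rpower_small d (eps / (2 * (26 * c / d) + 1)) Hd) as [N1 [HN1 HN1']].
    { apply Rdiv_lt_0_compat; [apply cond_pos|lra]. }
    exists (N0 + N1)%nat. intros n m Hn Hm.
    assert (HR : Rpower (INR (N0 + N1)) (- d) < eps / (2 * (26 * c / d) + 1)) by (apply HN1'; lia).
    assert (0 <= Rpower (INR (N0 + N1)) (- d)) by (unfold Rpower; left; apply exp_pos).
    pose proof (Htail (N0 + N1)%nat n ltac:(lia) Hn).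
    pose proof (Htail (N0 + N1)%nat m ltac:(lia) Hm).
    assert (Habs : Rabs (box_sum g n - box_sum g m) <= 2 * (26 * c / d) * Rpower (INR (N0 + N1)) (- d)).
    { replace (box_sum g n - box_sum g m) with ((box_sum g n - box_sum g (N0+N1)%nat) - (box_sum g m - box_sum g (N0+N1)%nat)) by ring.
      eapply Rle_trans; [apply Rabs_triang|]. rewrite Rabs_Ropp. lra. }
    pose proof (cond_pos eps).
    assert (2 * (26 * c / d) * Rpower (INR (N0 + N1)) (- d) < eps).
    { apply Rle_lt_trans with ((2 * (26 * c / d) + 1) * Rpower (INR (N0 + N1)) (- d)); [nra|].
      apply Rmult_lt_compat_l with (r := 2 * (26 * c / d) + 1) in HR; [|lra].
      replace ((2 * (26 * c / d) + 1) * (eps / (2 * (26 * c / d) + 1))) with (pos eps) in HR by (field; lra).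
      lra. }
    lra. }
  destruct Hex as [l Hl].
  assert (Hls : lattice_sum g = l). { unfold lattice_sum. rewrite (is_lim_seq_unique _ _ Hl). reflexivity. }
  rewrite Hls. split; [exact Hl|].
  intros N HN'. apply Rabs_le. split.
  - assert (Rbar_le (box_sum g N - 26 * c / d * Rpower (INR N) (- d)) l).
    { apply (is_lim_seq_le_loc (fun _ => box_sum g N - 26 * c / d * Rpower (INR N) (- d)) (box_sum g)).
      - exists N. intros M HM. pose proof (Htail N M HN' HM). apply Rabs_le_between in H. lra.
      - apply is_lim_seq_const.
      - exact Hl. }
    simpl in H. lra.
  - assert (Rbar_le l (box_sum g N + 26 * c / d * Rpower (INR N) (- d))).
    { apply (is_lim_seq_le_loc (box_sum g) (fun _ => box_sum g N + 26 * c / d * Rpower (INR N) (- d))).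
      - exists N. intros M HM. pose proof (Htail N M HN' HM). apply Rabs_le_between in H. lra.
      - exact Hl.
      - apply is_lim_seq_const. }
    simpl in H. lra.
Qed.

Lemma Rpower_pos x e : 0 < Rpower x e.
Proof. unfold Rpower; apply exp_pos. Qed.

Lemma Rpower_anti x y e : 0 < x -> x <= y -> 0 <= e -> Rpower y (- e) <= Rpower x (- e).
Proof.
  intros Hx Hxy He. unfold Rpower. destruct (Req_dec x y) as [->|Hne]; [lra|].
  assert (ln x < ln y) by (apply ln_increasing; lra).
  destruct (Req_dec e 0) as [->|He']. { rewrite !Ropp_0, !Rmult_0_l; lra. }
  left; apply exp_increasing. nra.
Qed.

Lemma TD_plus g1 g2 c1 c2 d N1 N2 : TD g1 c1 d N1 -> TD g2 c2 d N2 ->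
  TD (fun m n p => g1 m n p + g2 m n p) (c1 + c2) d (Nat.max N1 N2).
Proof.
  intros [H1c [Hd [H1N H1]]] [H2c [_ [H2N H2]]].
  split; [lra|split; [lra|split; [lia|]]]. intros m n p Hk.
  specialize (H1 m n p ltac:(lia)). specialize (H2 m n p ltac:(lia)).
  eapply Rle_trans; [apply Rabs_triang|]. lra.
Qed.

Lemma TD_scal g k c d N : TD g c d N -> TD (fun m n p => k * g m n p) (Rabs k * c) d N.
Proof.
  intros [Hc [Hd [HN H]]]. split; [apply Rmult_le_pos; [apply Rabs_pos|lra]|split; [lra|split; [lia|]]].
  intros m n p Hk. rewrite Rabs_mult, Rmult_assoc. apply Rmult_le_compat_l; [apply Rabs_pos|auto].
Qed.

Lemma TD_le g1 g2 c d N : TD g1 c d N -> (forall m n p, Rabs (g2 m n p) <= Rabs (g1 m n p)) -> TD g2 c d N.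
Proof.
  intros [Hc [Hd [HN H]]] Hle. split; [lra|split; [lra|split; [lia|]]].
  intros m n p Hk. eapply Rle_trans; [apply Hle|auto].
Qed.

Lemma TD_ext g1 g2 c d N : TD g1 c d N -> (forall m n p, g1 m n p = g2 m n p) -> TD g2 c d N.
Proof. intros H E. apply (TD_le g1); auto. intros; rewrite E; lra. Qed.

Lemma TD_mono g c c' d N N' : TD g c d N -> c <= c' -> (N <= N')%nat -> TD g c' d N'.
Proof.
  intros [Hc [Hd [HN H]]] Hcc HNN. split; [lra|split; [lra|split; [lia|]]].
  intros m n p Hk. eapply Rle_trans; [apply H; lia|].
  apply Rmult_le_compat_r; [left; apply Rpower_pos|lra].
Qed.

Definition notorig (m n p : Z) : Prop := ~ (m = 0 /\ n = 0 /\ p = 0)%Z.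

Lemma box_sum_ext g1 g2 : (forall m n p, notorig m n p -> g1 m n p = g2 m n p) ->
  forall N, box_sum g1 N = box_sum g2 N.
Proof.
  intros H N. rewrite !box_cube. apply cube_ext; intros m n p _ _ _. unfold z0.
  destruct (Z.eqb m 0 && Z.eqb n 0 && Z.eqb p 0)%bool eqn:E; [reflexivity|].
  apply H. intros [-> [-> ->]]. simpl in E. discriminate.
Qed.

Lemma ls_ext g1 g2 : (forall m n p, notorig m n p -> g1 m n p = g2 m n p) ->
  lattice_sum g1 = lattice_sum g2.
Proof. intros H. unfold lattice_sum. f_equal. apply Lim_seq_ext. apply box_sum_ext; auto. Qed.

Lemma box_sum_plus g1 g2 N :
  box_sum (fun m n p => g1 m n p + g2 m n p) N = box_sum g1 N + box_sum g2 N.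
Proof.
  rewrite !box_cube, <- cube_plus. apply cube_ext; intros. unfold z0.
  destruct (Z.eqb m 0 && Z.eqb n 0 && Z.eqb p 0)%bool; lra.
Qed.

Lemma box_sum_scal g k N : box_sum (fun m n p => k * g m n p) N = k * box_sum g N.
Proof.
  rewrite !box_cube, <- cube_scal. apply cube_ext; intros. unfold z0.
  destruct (Z.eqb m 0 && Z.eqb n 0 && Z.eqb p 0)%bool; lra.
Qed.

Definition TDe (g : Z -> Z -> Z -> R) : Prop := exists c d N, TD g c d N.

Lemma TDe_lim g : TDe g -> is_lim_seq (box_sum g) (lattice_sum g).
Proof. intros [c [d [N H]]]. apply (TD_conv g c d N H). Qed.

Lemma ls_plus g1 g2 : TDe g1 -> TDe g2 ->
  lattice_sum (fun m n p => g1 m n p + g2 m n p) = lattice_sum g1 + lattice_sum g2.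
Proof.
  intros H1 H2. apply TDe_lim in H1. apply TDe_lim in H2.
  unfold lattice_sum at 1. rewrite (Lim_seq_ext _ (fun N => box_sum g1 N + box_sum g2 N)) by (intros; apply box_sum_plus).
  rewrite (is_lim_seq_unique _ _ (is_lim_seq_plus' _ _ _ _ H1 H2)). reflexivity.
Qed.

Lemma ls_scal g k : TDe g -> lattice_sum (fun m n p => k * g m n p) = k * lattice_sum g.
Proof.
  intros H1. apply TDe_lim in H1.
  unfold lattice_sum at 1. rewrite (Lim_seq_ext _ (fun N => k * box_sum g N)) by (intros; apply box_sum_scal).
  rewrite (is_lim_seq_unique _ _ (is_lim_seq_scal_l _ k _ H1)). reflexivity.
Qed.

Lemma TDe_plus g1 g2 : TDe g1 -> TDe g2 -> TDe (fun m n p => g1 m n p + g2 m n p).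
Proof.
  intros [c1 [d1 [N1 H1]]] [c2 [d2 [N2 H2]]].
  set (d := Rmin d1 d2).
  assert (W : forall g c d0 N, TD g c d0 N -> d <= d0 -> TD g c d N).
  { intros g c d0 N [Hc [Hd [HN H]]] Hdd. split; [lra|split; [unfold d; apply Rmin_glb_lt; [apply H1|apply H2]|split; [lia|]]].
    intros m n p Hk. eapply Rle_trans; [apply H; auto|]. apply Rmult_le_compat_l; [lra|].
    assert (1 <= nrm m n p). { unfold nrm. apply IZR_le. lia. }
    unfold Rpower. destruct (Req_dec (nrm m n p) 1) as [E|E].
    - rewrite E, ln_1, !Rmult_0_r. lra.
    - assert (0 < ln (nrm m n p)) by (rewrite <- ln_1; apply ln_increasing; lra).
      assert (- (3 + d0) * ln (nrm m n p) <= - (3 + d) * ln (nrm m n p)) by nra.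
      destruct (Rle_lt_or_eq_dec _ _ H4) as [Hl|Hl]; [left; apply exp_increasing; exact Hl|right; rewrite Hl; reflexivity]. }
  exists (c1 + c2), d, (Nat.max N1 N2). apply TD_plus.
  - apply (W _ _ d1); auto. apply Rmin_l.
  - apply (W _ _ d2); auto. apply Rmin_r.
Qed.

Lemma TDe_scal g k : TDe g -> TDe (fun m n p => k * g m n p).
Proof. intros [c [d [N H]]]. exists (Rabs k * c), d, N. apply TD_scal; auto. Qed.

Lemma TDe_ext g1 g2 : TDe g1 -> (forall m n p, g1 m n p = g2 m n p) -> TDe g2.
Proof. intros [c [d [N H]]] E. exists c, d, N. eapply TD_ext; eauto. Qed.

Definition T3 := (Z * Z * Z)%type.
Definition act (g : Z -> Z -> Z -> R) (A : T3 -> T3) : Z -> Z -> Z -> R :=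
  fun m n p => match A (m, n, p) with (a, b, c) => g a b c end.

Definition good (A : T3 -> T3) : Prop :=
  forall g, TDe g -> TDe (act g A) /\ lattice_sum (act g A) = lattice_sum g.

Lemma good_comp A B : good A -> good B -> good (fun k => A (B k)).
Proof.
  intros HA HB g Hg.
  assert (E : forall m n p, act (act g A) B m n p = act g (fun k => A (B k)) m n p).
  { intros. unfold act. destruct (B (m, n, p)) as [[a b] c]. reflexivity. }
  destruct (HA g Hg) as [H1 H2]. destruct (HB _ H1) as [H3 H4]. split.
  - eapply TDe_ext; eauto.
  - rewrite <- H2, <- H4. apply ls_ext. intros; symmetry; apply E.
Qed.

Lemma good_id : good (fun k => k).
Proof. intros g Hg. unfold act. split.
  - eapply TDe_ext; [exact Hg|]. reflexivity.
  - apply ls_ext. reflexivity. Qed.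

Lemma good_ext A B : good A -> (forall k, A k = B k) -> good B.
Proof.
  intros HA E g Hg. destruct (HA g Hg) as [H1 H2].
  assert (E' : forall m n p, act g A m n p = act g B m n p) by (intros; unfold act; rewrite E; reflexivity).
  split; [eapply TDe_ext; eauto|]. rewrite <- H2. apply ls_ext. intros; symmetry; apply E'.
Qed.

Lemma good_exact A :
  (forall m n p, match A (m, n, p) with (a, b, c) => nrmZ a b c = nrmZ m n p end) ->
  (forall m n p, match A (m, n, p) with (a, b, c) =>
     (Z.eqb a 0 && Z.eqb b 0 && Z.eqb c 0)%bool = (Z.eqb m 0 && Z.eqb n 0 && Z.eqb p 0)%bool end) ->
  (forall h N, cube (act h A) N = cube h N) -> good A.
Proof.
  intros Hn Ho Hc g [c [d [N0 [Hc0 [Hd [HN H]]]]]]. split.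
  - exists c, d, N0. split; [lra|split; [lra|split; [lia|]]]. intros m n p Hk.
    specialize (Hn m n p). unfold act. unfold nrm. destruct (A (m, n, p)) as [[a b] e].
    rewrite <- Hn. apply H. lia.
  - unfold lattice_sum. f_equal. apply Lim_seq_ext. intros N.
    rewrite !box_cube. rewrite <- (Hc (z0 g) N). apply cube_ext. intros m n p _ _ _.
    unfold z0, act. specialize (Ho m n p). destruct (A (m, n, p)) as [[a b] e].
    rewrite Ho. reflexivity.
Qed.

Lemma zsum_neg N G : zsum N (fun i => G (- i)%Z) = zsum N G.
Proof. unfold zsum. rewrite isum_refl. f_equal. lia. Qed.

Ltac zb := unfold nrmZ; intros; simpl; try lia.

Definition swmn (k : T3) : T3 := match k with (m, n, p) => (n, m, p) end.
Definition swnp (k : T3) : T3 := match k with (m, n, p) => (m, p, n) end.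
Definition negm (k : T3) : T3 := match k with (m, n, p) => (- m, n, p)%Z end.
Definition negn (k : T3) : T3 := match k with (m, n, p) => (m, - n, p)%Z end.
Definition negp (k : T3) : T3 := match k with (m, n, p) => (m, n, - p)%Z end.
Definition sh (a b : Z) (k : T3) : T3 := match k with (m, n, p) => (m, n, p + a * m + b * n)%Z end.

Lemma good_swmn : good swmn.
Proof.
  apply good_exact.
  - zb.
  - intros; simpl. destruct (Z.eqb m 0), (Z.eqb n 0); reflexivity.
  - intros h N. unfold cube, act; simpl. apply isum_swap.
Qed.

Lemma good_swnp : good swnp.
Proof.
  apply good_exact.
  - zb.
  - intros; simpl. destruct (Z.eqb m 0), (Z.eqb n 0), (Z.eqb p 0); reflexivity.
  - intros h N. unfold cube, act; simpl. apply zsum_ext; intros. apply isum_swap.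
Qed.

Lemma eqb_opp z : Z.eqb (- z) 0 = Z.eqb z 0.
Proof. destruct (Z.eqb z 0) eqn:E; [apply Z.eqb_eq in E; subst; reflexivity|]. apply Z.eqb_neq in E. apply Z.eqb_neq. lia. Qed.

Lemma good_negm : good negm.
Proof.
  apply good_exact.
  - zb.
  - intros; simpl. rewrite eqb_opp. reflexivity.
  - intros h N. unfold cube, act; simpl. apply (zsum_neg N (fun m => zsum N (fun n => zsum N (fun p => h m n p)))).
Qed.

Lemma good_negn : good negn.
Proof.
  apply good_exact.
  - zb.
  - intros; simpl. rewrite eqb_opp. reflexivity.
  - intros h N. unfold cube, act; simpl. apply zsum_ext; intros m _.
    apply (zsum_neg N (fun n => zsum N (fun p => h m n p))).
Qed.

Lemma good_negp : good negp.
Proof.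
  apply good_exact.
  - zb.
  - intros; simpl. rewrite eqb_opp. reflexivity.
  - intros h N. unfold cube, act; simpl. apply zsum_ext; intros m _. apply zsum_ext; intros n _.
    apply (zsum_neg N (fun p => h m n p)).
Qed.

Lemma zsum_mono N M F : (N <= M)%nat -> (forall i, 0 <= F i) -> zsum N F <= zsum M F.
Proof.
  intros H HF. rewrite <- (zsum_restrict N M) by exact H. apply zsum_le. intros i _.
  destruct (inb N i); [lra|apply HF].
Qed.

Lemma shear_inner N h (a : Z) : (Z.abs a <= 2 * Z.of_nat N)%Z ->
  Rabs (zsum N (fun p => h (p + a)%Z) - zsum N h) <=
  zsum (3 * N) (fun q => if (Z.of_nat N <? Z.abs q + Z.abs a)%Z then Rabs (h q) else 0).
Proof.
  intros Ha.
  assert (E1 : zsum N (fun p => h (p + a)%Z) =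
     zsum (3 * N) (fun q => if ((- Z.of_nat N + a <=? q) && (q <? - Z.of_nat N + a + Z.of_nat (2 * N + 1)))%Z%bool then h q else 0)).
  { unfold zsum at 1. rewrite isum_shift. unfold zsum. rewrite isum_window; [reflexivity|lia|lia]. }
  rewrite E1, <- (zsum_restrict N (3 * N) h) by lia.
  unfold zsum. rewrite <- isum_minus. eapply Rle_trans; [apply isum_abs|].
  apply isum_le. intros q _. unfold inb.
  destruct ((- Z.of_nat N + a <=? q) && (q <? - Z.of_nat N + a + Z.of_nat (2 * N + 1)))%Z%bool eqn:W;
  destruct (Z.abs q <=? Z.of_nat N)%Z eqn:I;
  destruct (Z.of_nat N <? Z.abs q + Z.abs a)%Z eqn:C;
  try (rewrite Rminus_diag, Rabs_R0; try apply Rabs_pos; lra);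
  try (rewrite Rminus_0_r; lra); try (rewrite Rminus_0_l, Rabs_Ropp; lra);
  exfalso; rewrite ?Bool.andb_true_iff, ?Bool.andb_false_iff, ?Z.leb_le, ?Z.leb_gt, ?Z.ltb_lt, ?Z.ltb_ge in *; lia.
Qed.

Lemma zsum_minus N F G : zsum N (fun i => F i - G i) = zsum N F - zsum N G.
Proof. apply isum_minus. Qed.
Lemma zsum_abs N F : Rabs (zsum N F) <= zsum N (fun i => Rabs (F i)).
Proof. apply isum_abs. Qed.
Lemma zsum_nonneg N F : (forall i, 0 <= F i) -> 0 <= zsum N F.
Proof. intros; apply isum_nonneg; auto. Qed.

Definition Hb (N : nat) (h : Z -> Z -> Z -> R) : Z -> Z -> Z -> R :=
  fun m n q => if (Z.of_nat N <? Z.abs m + Z.abs n + Z.abs q)%Z then Rabs (h m n q) else 0.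

Lemma Hb_nonneg N h m n q : 0 <= Hb N h m n q.
Proof. unfold Hb. destruct (_ <? _)%Z; [apply Rabs_pos|lra]. Qed.

Lemma shear_cube N h a b : (Z.abs a <= 1)%Z -> (Z.abs b <= 1)%Z ->
  Rabs (cube (act h (sh a b)) N - cube h N) <= cube (Hb N h) (3 * N).
Proof.
  intros Ha Hb'. unfold cube.
  rewrite <- zsum_minus. eapply Rle_trans; [apply zsum_abs|].
  apply Rle_trans with (zsum N (fun m => zsum N (fun n => zsum (3 * N) (fun q => Hb N h m n q)))).
  - apply zsum_le; intros m Hm. rewrite <- zsum_minus. eapply Rle_trans; [apply zsum_abs|].
    apply zsum_le; intros n Hn.
    assert (E : zsum N (fun p => act h (sh a b) m n p) = zsum N (fun p => h m n (p + (a * m + b * n))%Z)).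
    { apply zsum_ext; intros. unfold act, sh. f_equal. lia. }
    rewrite E.
    assert (Hab : (Z.abs (a * m + b * n) <= Z.abs m + Z.abs n)%Z).
    { rewrite Z.abs_le in Ha, Hb'. destruct Ha, Hb'. nia. }
    eapply Rle_trans; [apply (shear_inner N (fun p => h m n p) (a * m + b * n)); lia|].
    apply zsum_le; intros q _. unfold Hb.
    destruct (Z.of_nat N <? Z.abs q + Z.abs (a * m + b * n))%Z eqn:E1;
    destruct (Z.of_nat N <? Z.abs m + Z.abs n + Z.abs q)%Z eqn:E2;
    rewrite ?Z.ltb_lt, ?Z.ltb_ge in E1, E2; try lra; try lia. apply Rabs_pos.
  - apply Rle_trans with (zsum (3 * N) (fun m => zsum N (fun n => zsum (3 * N) (fun q => Hb N h m n q)))).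
    + apply zsum_mono; [lia|]. intros; apply zsum_nonneg; intros; apply zsum_nonneg; intros; apply Hb_nonneg.
    + apply zsum_le; intros. apply zsum_mono; [lia|]. intros; apply zsum_nonneg; intros; apply Hb_nonneg.
Qed.

Lemma cube_Hb_bound N h c d N0 : TD h c d N0 -> (N0 <= N / 3)%nat ->
  cube (Hb N h) (3 * N) <= 26 * c / d * Rpower (INR (N / 3)) (- d).
Proof.
  intros HT HN.
  assert (HT' : TD (Hb N h) c d N0).
  { apply (TD_le h); auto. intros. unfold Hb. destruct (_ <? _)%Z; rewrite ?Rabs_Rabsolu, ?Rabs_R0; [lra|apply Rabs_pos]. }
  assert (E0 : cube (Hb N h) (N / 3) = 0).
  { rewrite (cube_ext _ (Hb N h) (fun _ _ _ => 0)).
    - rewrite cube_const; ring.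
    - intros m n p Hm Hn Hp. unfold Hb.
      assert (3 * Z.of_nat (N / 3) <= Z.of_nat N)%Z.
      { pose proof (Nat.Div0.mul_div_le N 3). lia. }
      replace (Z.of_nat N <? Z.abs m + Z.abs n + Z.abs p)%Z with false by (symmetry; apply Z.ltb_ge; lia). reflexivity. }
  pose proof (tail_TD' (Hb N h) c d N0 (N / 3) (3 * N) HT' HN ltac:(pose proof (Nat.Div0.div_le_upper_bound N 3 (3*N)); lia)).
  rewrite E0, Rminus_0_r in H.
  eapply Rle_trans; [apply Rle_abs|exact H].
Qed.

Lemma TD_shear g c d N0 a b : (Z.abs a <= 1)%Z -> (Z.abs b <= 1)%Z -> TD g c d N0 ->
  TD (act g (sh a b)) (c * Rpower 3 (3 + d)) d (3 * N0).
Proof.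
  intros Ha Hb' [Hc [Hd [HN H]]]. split; [apply Rmult_le_pos; [lra|left; apply Rpower_pos]|].
  split; [lra|split; [lia|]]. intros m n p Hk. unfold act, sh.
  assert (Hn : (nrmZ m n p <= 3 * nrmZ m n (p + a * m + b * n))%Z).
  { unfold nrmZ. rewrite Z.abs_le in Ha, Hb'. destruct Ha, Hb'.
    assert (Z.abs (a * m) <= Z.abs m)%Z by (rewrite Z.abs_mul; nia).
    assert (Z.abs (b * n) <= Z.abs n)%Z by (rewrite Z.abs_mul; nia). lia. }
  eapply Rle_trans; [apply H; lia|].
  rewrite Rmult_assoc. apply Rmult_le_compat_l; [lra|].
  assert (Hpos : 0 < nrm m n p) by (unfold nrm; apply IZR_lt; lia).
  apply Rle_trans with (Rpower (nrm m n p / 3) (- (3 + d))).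
  - apply Rpower_anti; [lra| |lra]. unfold nrm. apply IZR_le in Hn. rewrite mult_IZR in Hn. lra.
  - right. unfold Rdiv. rewrite <- Rpower_mult_distr by lra. rewrite (Rmult_comm (Rpower 3 _)). f_equal.
    unfold Rpower. rewrite ln_Rinv by lra. f_equal. ring.
Qed.

Lemma approx_zero x K d Ns : 0 < d ->
  (forall N, (Ns <= N)%nat -> Rabs x <= K * Rpower (INR N) (- d)) -> x = 0.
Proof.
  intros Hd H. destruct (Req_dec x 0) as [E|E]; [exact E|exfalso].
  assert (Hx : 0 < Rabs x) by (apply Rabs_pos_lt; exact E).
  assert (HK : 0 <= K).
  { specialize (H Ns (Nat.le_refl _)). pose proof (Rpower_pos (INR Ns) (- d)).
    destruct (Rle_or_lt 0 K); [auto|]. nra. }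
  destruct (Rpower_small d (Rabs x / (K + 1)) Hd) as [N1 [_ HN1]].
  { apply Rdiv_lt_0_compat; lra. }
  specialize (HN1 (Ns + N1)%nat ltac:(lia)). specialize (H (Ns + N1)%nat ltac:(lia)).
  pose proof (Rpower_pos (INR (Ns + N1)) (- d)).
  assert (K * Rpower (INR (Ns + N1)) (- d) <= (K + 1) * Rpower (INR (Ns + N1)) (- d)) by nra.
  apply Rmult_lt_compat_l with (r := K + 1) in HN1; [|lra].
  replace ((K + 1) * (Rabs x / (K + 1))) with (Rabs x) in HN1 by (field; lra). lra.
Qed.

Lemma good_sh a b : (Z.abs a <= 1)%Z -> (Z.abs b <= 1)%Z -> good (sh a b).
Proof.
  intros Ha Hb' g [c [d [N0 HT]]].
  pose proof (TD_shear g c d N0 a b Ha Hb' HT) as HT'.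
  split; [exists (c * Rpower 3 (3 + d)), d, (3 * N0)%nat; exact HT'|].
  pose proof HT as [Hc [Hd [HN _]]].
  apply Rminus_diag_uniq.
  set (c' := c * Rpower 3 (3 + d)).
  assert (Hc' : 0 <= c') by (unfold c'; apply Rmult_le_pos; [lra|left; apply Rpower_pos]).
  apply (approx_zero _ (26 * c' / d + 26 * c / d + 26 * c / d) d (3 * N0)); [exact Hd|].
  intros N HNs.
  destruct (TD_conv _ _ _ _ HT') as [_ B1].
  destruct (TD_conv _ _ _ _ HT) as [_ B2].
  specialize (B1 (3 * N)%nat ltac:(lia)). specialize (B2 (3 * N)%nat ltac:(lia)).
  assert (B3 : Rabs (box_sum (act g (sh a b)) (3 * N) - box_sum g (3 * N)) <= 26 * c / d * Rpower (INR N) (- d)).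
  { rewrite !box_cube.
    rewrite (cube_ext _ (z0 (act g (sh a b))) (act (z0 g) (sh a b))).
    2:{ intros m n p _ _ _. unfold z0, act, sh.
        destruct (Z.eqb m 0) eqn:E1; destruct (Z.eqb n 0) eqn:E2; simpl; try reflexivity.
        apply Z.eqb_eq in E1, E2. subst. replace (p + a * 0 + b * 0)%Z with p by ring. reflexivity. }
    eapply Rle_trans; [apply shear_cube; auto|].
    replace (3 * N / 3)%nat with N in * by (rewrite Nat.mul_comm, Nat.div_mul; lia).
    pose proof (cube_Hb_bound (3 * N) (z0 g) c d N0 (TD_z0 _ _ _ _ HT)).
    rewrite (Nat.mul_comm 3 N), Nat.div_mul in H by lia. rewrite (Nat.mul_comm 3 N). apply H. lia. }
  assert (HR : Rpower (INR (3 * N)) (- d) <= Rpower (INR N) (- d)).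
  { apply Rpower_anti; [apply (lt_INR 0); lia|apply le_INR; lia|lra]. }
  assert (0 <= 26 * c' / d) by (unfold Rdiv; apply Rmult_le_pos; [lra|left; apply Rinv_0_lt_compat; lra]).
  assert (0 <= 26 * c / d) by (unfold Rdiv; apply Rmult_le_pos; [lra|left; apply Rinv_0_lt_compat; lra]).
  replace (lattice_sum (act g (sh a b)) - lattice_sum g) with
    ((lattice_sum (act g (sh a b)) - box_sum (act g (sh a b)) (3 * N)) +
     (box_sum (act g (sh a b)) (3 * N) - box_sum g (3 * N)) - (lattice_sum g - box_sum g (3 * N))) by ring.
  set (x1 := lattice_sum (act g (sh a b)) - box_sum (act g (sh a b)) (3 * N)) in *.
  set (x2 := box_sum (act g (sh a b)) (3 * N) - box_sum g (3 * N)) in *.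
  set (x3 := lattice_sum g - box_sum g (3 * N)) in *.
  assert (Rabs (x1 + x2 - x3) <= Rabs x1 + Rabs x2 + Rabs x3).
  { pose proof (Rabs_triang (x1 + x2) (- x3)) as T1. pose proof (Rabs_triang x1 x2) as T2. rewrite Rabs_Ropp in T1.
    unfold Rminus. lra. }
  fold c' in B1.
  assert (26 * c' / d * Rpower (INR (3 * N)) (- d) <= 26 * c' / d * Rpower (INR N) (- d)) by (apply Rmult_le_compat_l; lra).
  assert (26 * c / d * Rpower (INR (3 * N)) (- d) <= 26 * c / d * Rpower (INR N) (- d)) by (apply Rmult_le_compat_l; lra).
  lra.
Qed.

Definition el0 (k : T3) : T3 := match k with (m, n, p) => ((n + p), (n), (- m - n - p))%Z end.
Lemma good_el0 : good el0.
Proof. apply (good_ext _ _ (good_comp swmn _ good_swmn (good_comp negp _ good_negp (good_comp (sh (0) (1)) _ (good_sh (0) (1) ltac:(lia) ltac:(lia)) (good_comp swnp _ good_swnp (good_comp swmn _ good_swmn (good_sh (0) (1) ltac:(lia) ltac:(lia)))))))). intros [[m n] p]; cbn [el0 swmn swnp negm negn negp sh]; first [reflexivity | (apply (f_equal2 pair); [apply (f_equal2 pair)|]; lia)]. Qed.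
Definition el1 (k : T3) : T3 := match k with (m, n, p) => ((n + p), (m + p), (- p))%Z end.
Lemma good_el1 : good el1.
Proof. apply (good_ext _ _ (good_comp swmn _ good_swmn (good_comp (sh (-1) (0)) _ (good_sh (-1) (0) ltac:(lia) ltac:(lia)) (good_comp swnp _ good_swnp (good_comp swmn _ good_swmn (good_comp (sh (-1) (1)) _ (good_sh (-1) (1) ltac:(lia) ltac:(lia)) (good_comp swnp _ good_swnp (good_sh (1) (0) ltac:(lia) ltac:(lia))))))))). intros [[m n] p]; cbn [el1 swmn swnp negm negn negp sh]; first [reflexivity | (apply (f_equal2 pair); [apply (f_equal2 pair)|]; lia)]. Qed.
Definition el2 (k : T3) : T3 := match k with (m, n, p) => ((- n), (- n - p), (m + n + p))%Z end.
Lemma good_el2 : good el2.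
Proof. apply (good_ext _ _ (good_comp swnp _ good_swnp (good_comp negm _ good_negm (good_comp (sh (0) (-1)) _ (good_sh (0) (-1) ltac:(lia) ltac:(lia)) (good_comp swnp _ good_swnp (good_comp swmn _ good_swmn (good_sh (1) (1) ltac:(lia) ltac:(lia)))))))). intros [[m n] p]; cbn [el2 swmn swnp negm negn negp sh]; first [reflexivity | (apply (f_equal2 pair); [apply (f_equal2 pair)|]; lia)]. Qed.
Definition el3 (k : T3) : T3 := match k with (m, n, p) => ((m), (m + p), (- m - n - p))%Z end.
Lemma good_el3 : good el3.
Proof. apply (good_ext _ _ (good_comp negp _ good_negp (good_comp (sh (0) (1)) _ (good_sh (0) (1) ltac:(lia) ltac:(lia)) (good_comp swnp _ good_swnp (good_sh (1) (0) ltac:(lia) ltac:(lia)))))). intros [[m n] p]; cbn [el3 swmn swnp negm negn negp sh]; first [reflexivity | (apply (f_equal2 pair); [apply (f_equal2 pair)|]; lia)]. Qed.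
Definition el4 (k : T3) : T3 := match k with (m, n, p) => ((- n), (- m), (- p))%Z end.
Lemma good_el4 : good el4.
Proof. apply (good_ext _ _ (good_comp swmn _ good_swmn (good_comp negm _ good_negm (good_comp negn _ good_negn good_negp)))). intros [[m n] p]; cbn [el4 swmn swnp negm negn negp sh]; first [reflexivity | (apply (f_equal2 pair); [apply (f_equal2 pair)|]; lia)]. Qed.
Definition el5 (k : T3) : T3 := match k with (m, n, p) => ((- m - p), (- m), (m + n + p))%Z end.
Lemma good_el5 : good el5.
Proof. apply (good_ext _ _ (good_comp swmn _ good_swmn (good_comp swnp _ good_swnp (good_comp negm _ good_negm (good_comp (sh (0) (-1)) _ (good_sh (0) (-1) ltac:(lia) ltac:(lia)) (good_comp swnp _ good_swnp (good_sh (1) (1) ltac:(lia) ltac:(lia)))))))). intros [[m n] p]; cbn [el5 swmn swnp negm negn negp sh]; first [reflexivity | (apply (f_equal2 pair); [apply (f_equal2 pair)|]; lia)]. Qed.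
Definition el6 (k : T3) : T3 := match k with (m, n, p) => ((- n), (m + p), (- m + n))%Z end.
Lemma good_el6 : good el6.
Proof. apply (good_ext _ _ (good_comp negm _ good_negm (good_comp negp _ good_negp (good_comp (sh (-1) (0)) _ (good_sh (-1) (0) ltac:(lia) ltac:(lia)) (good_comp swnp _ good_swnp (good_comp swmn _ good_swmn (good_sh (1) (0) ltac:(lia) ltac:(lia)))))))). intros [[m n] p]; cbn [el6 swmn swnp negm negn negp sh]; first [reflexivity | (apply (f_equal2 pair); [apply (f_equal2 pair)|]; lia)]. Qed.
Definition el7 (k : T3) : T3 := match k with (m, n, p) => ((- m - p), (n), (m - n))%Z end.
Lemma good_el7 : good el7.
Proof. apply (good_ext _ _ (good_comp swmn _ good_swmn (good_comp negn _ good_negn (good_comp (sh (-1) (0)) _ (good_sh (-1) (0) ltac:(lia) ltac:(lia)) (good_comp swnp _ good_swnp (good_comp swmn _ good_swmn (good_sh (1) (0) ltac:(lia) ltac:(lia)))))))). intros [[m n] p]; cbn [el7 swmn swnp negm negn negp sh]; first [reflexivity | (apply (f_equal2 pair); [apply (f_equal2 pair)|]; lia)]. Qed.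
Definition el8 (k : T3) : T3 := match k with (m, n, p) => ((n + p), (- m), (m - n))%Z end.
Lemma good_el8 : good el8.
Proof. apply (good_ext _ _ (good_comp swmn _ good_swmn (good_comp negm _ good_negm (good_comp negp _ good_negp (good_comp (sh (-1) (0)) _ (good_sh (-1) (0) ltac:(lia) ltac:(lia)) (good_comp swnp _ good_swnp (good_sh (0) (1) ltac:(lia) ltac:(lia)))))))). intros [[m n] p]; cbn [el8 swmn swnp negm negn negp sh]; first [reflexivity | (apply (f_equal2 pair); [apply (f_equal2 pair)|]; lia)]. Qed.
Definition el9 (k : T3) : T3 := match k with (m, n, p) => ((m), (n), (p))%Z end.
Lemma good_el9 : good el9.
Proof. apply (good_ext _ _ good_id). intros [[m n] p]; cbn [el9 swmn swnp negm negn negp sh]; first [reflexivity | (apply (f_equal2 pair); [apply (f_equal2 pair)|]; lia)]. Qed.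
Definition el10 (k : T3) : T3 := match k with (m, n, p) => ((- m - p), (- n - p), (p))%Z end.
Lemma good_el10 : good el10.
Proof. apply (good_ext _ _ (good_comp swmn _ good_swmn (good_comp negm _ good_negm (good_comp negp _ good_negp (good_comp (sh (0) (1)) _ (good_sh (0) (1) ltac:(lia) ltac:(lia)) (good_comp swnp _ good_swnp (good_comp swmn _ good_swmn (good_comp (sh (-1) (-1)) _ (good_sh (-1) (-1) ltac:(lia) ltac:(lia)) (good_comp swnp _ good_swnp (good_sh (0) (1) ltac:(lia) ltac:(lia))))))))))). intros [[m n] p]; cbn [el10 swmn swnp negm negn negp sh]; first [reflexivity | (apply (f_equal2 pair); [apply (f_equal2 pair)|]; lia)]. Qed.
Definition el11 (k : T3) : T3 := match k with (m, n, p) => ((m), (- n - p), (- m + n))%Z end.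
Lemma good_el11 : good el11.
Proof. apply (good_ext _ _ (good_comp negn _ good_negn (good_comp (sh (-1) (0)) _ (good_sh (-1) (0) ltac:(lia) ltac:(lia)) (good_comp swnp _ good_swnp (good_sh (0) (1) ltac:(lia) ltac:(lia)))))). intros [[m n] p]; cbn [el11 swmn swnp negm negn negp sh]; first [reflexivity | (apply (f_equal2 pair); [apply (f_equal2 pair)|]; lia)]. Qed.
Definition G12 : list (T3 -> T3) := [el0; el1; el2; el3; el4; el5; el6; el7; el8; el9; el10; el11].
Lemma G12_good : Forall good G12.
Proof. unfold G12. repeat (apply Forall_cons; [solve [auto using good_el0, good_el1, good_el2, good_el3, good_el4, good_el5, good_el6, good_el7, good_el8, good_el9, good_el10, good_el11]|]). apply Forall_nil. Qed.

Ltac pushIZR := rewrite ?plus_IZR, ?minus_IZR, ?opp_IZR, ?mult_IZR.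

Lemma TDe_zero : TDe (fun _ _ _ => 0).
Proof. exists 0, 1, 1%nat. split; [lra|split; [lra|split; [lia|]]]. intros. rewrite Rabs_R0; lra. Qed.

Lemma ls_zero g : TDe g -> lattice_sum (fun _ _ _ => 0) = 0.
Proof. intros H. rewrite (ls_ext _ (fun m n p => 0 * g m n p)) by (intros; ring). rewrite ls_scal by exact H. ring. Qed.

Definition lsum (l : list (T3 -> T3)) (g : Z -> Z -> Z -> R) : Z -> Z -> Z -> R :=
  fun m n p => fold_right (fun A acc => act g A m n p + acc) 0 l.

Lemma avg_list l g : Forall good l -> TDe g ->
  TDe (lsum l g) /\ lattice_sum (lsum l g) = INR (length l) * lattice_sum g.
Proof.
  intros Hl Hg. induction Hl as [|A l HA Hl IH].
  - unfold lsum; simpl. split; [apply TDe_zero|]. rewrite (ls_zero g Hg). ring.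
  - destruct IH as [IH1 IH2]. destruct (HA g Hg) as [H1 H2].
    unfold lsum at 1 2. simpl fold_right.
    split.
    + apply TDe_plus; auto.
    + change (lattice_sum (fun m n p => act g A m n p + lsum l g m n p) = INR (length (A :: l)) * lattice_sum g).
      rewrite ls_plus by auto. rewrite H2, IH2. simpl length. rewrite S_INR. ring.
Qed.

Definition Rqz (m n p : Z) : R := Rq m n p.

Lemma G12_Rinv : Forall (fun A => forall m n p, act Rq A m n p = Rq m n p) G12.
Proof.
  unfold G12. repeat (apply Forall_cons; [intros m n p; unfold act; cbn [el0 el1 el2 el3 el4 el5 el6 el7 el8 el9 el10 el11]; unfold Rq; pushIZR; ring|]).
  apply Forall_nil.
Qed.

Lemma lsum_factor l P hf : Forall (fun A => forall m n p, act Rq A m n p = Rq m n p) l ->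
  forall m n p, lsum l (fun m n p => P m n p * hf (Rq m n p)) m n p = lsum l P m n p * hf (Rq m n p).
Proof.
  intros Hl m n p. induction Hl as [|A l HA Hl IH]; unfold lsum in *; simpl; [ring|].
  rewrite IH. specialize (HA m n p). unfold act in *. destruct (A (m, n, p)) as [[a b] c].
  rewrite HA. ring.
Qed.

Lemma avg_poly P hf : TDe (fun m n p => P m n p * hf (Rq m n p)) ->
  lattice_sum (fun m n p => P m n p * hf (Rq m n p)) =
  lattice_sum (fun m n p => (/ 12 * lsum G12 P m n p) * hf (Rq m n p)).
Proof.
  intros H. destruct (avg_list G12 _ G12_good H) as [_ E].
  rewrite (ls_ext (fun m n p => / 12 * lsum G12 P m n p * hf (Rq m n p))
                  (fun m n p => / 12 * lsum G12 (fun m n p => P m n p * hf (Rq m n p)) m n p)).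
  2:{ intros. rewrite lsum_factor by exact G12_Rinv. ring. }
  rewrite ls_scal. 2:{ apply avg_list; [apply G12_good|exact H]. }
  rewrite E. simpl length. rewrite INR_IZR_INZ. simpl Z.of_nat. field.
Qed.

Ltac nz := repeat match goal with
  | |- _ /\ _ => split
  | |- True => exact I
  | |- _ * _ <> 0 => apply Rmult_integral_contrapositive_currified
  | |- ?x <> 0 => first [assumption | lra]
  end.

Definition Aat (a : nat -> R) (m n p : Z) : R := IZR m + a 2%nat * IZR n + a 3%nat * IZR p.
Definition Bat (a : nat -> R) (m n p : Z) : R := IZR n + a 4%nat * IZR p.

Definition tm (a : nat -> R) (sg k : R) (e1 e2 e3 e4 : nat) (X : R) : R :=
  sg * (k * a 0%nat ^ e1 * a 1%nat ^ e2 * (/ a 0%nat) ^ e3 * (/ a 1%nat) ^ e4) * X.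

Section Calc.
Variable V : R.

Definition Qa (a : nat -> R) (m n p : Z) : R := QL V (a 0%nat) (a 1%nat) (a 2%nat) (a 3%nat) (a 4%nat) m n p.

Definition dQ (j : nat) (a : nat -> R) (m n p : Z) : R :=
  let A := Aat a m n p in let B := Bat a m n p in
  let n' := IZR n in let p' := IZR p in
  match j with
  | 0 => Cvol V * (tm a (-1) 1 0 0 2 0 (A ^ 2) + tm a (-1) 1 0 2 2 0 (B ^ 2) + tm a 1 1 1 0 0 2 (p' ^ 2))
  | 1 => Cvol V * (tm a 1 2 0 1 1 0 (B ^ 2) + tm a (-1) 1 2 0 0 3 (p' ^ 2) + tm a 0 0 0 0 0 0 0)
  | 2 => Cvol V * (tm a 1 2 0 0 1 0 (A * n') + tm a 0 0 0 0 0 0 0 + tm a 0 0 0 0 0 0 0)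
  | 3 => Cvol V * (tm a 1 2 0 0 1 0 (A * p') + tm a 0 0 0 0 0 0 0 + tm a 0 0 0 0 0 0 0)
  | 4 => Cvol V * (tm a 1 2 0 2 1 0 (B * p') + tm a 0 0 0 0 0 0 0 + tm a 0 0 0 0 0 0 0)
  | _ => 0
  end.

Definition d2Q (i j : nat) (a : nat -> R) (m n p : Z) : R :=
  let A := Aat a m n p in let B := Bat a m n p in
  let n' := IZR n in let p' := IZR p in
  let z := tm a 0 0 0 0 0 0 0 in
  match i, j with
  | 0, 0 => Cvol V * (tm a 1 2 0 0 3 0 (A ^ 2) + tm a 1 2 0 2 3 0 (B ^ 2) + tm a 1 1 0 0 0 2 (p' ^ 2))
  | 1, 0 | 0, 1 => Cvol V * (tm a (-1) 2 0 1 2 0 (B ^ 2) + tm a (-1) 2 1 0 0 3 (p' ^ 2) + z)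
  | 2, 0 | 0, 2 => Cvol V * (tm a (-1) 2 0 0 2 0 (A * n') + z + z)
  | 3, 0 | 0, 3 => Cvol V * (tm a (-1) 2 0 0 2 0 (A * p') + z + z)
  | 4, 0 | 0, 4 => Cvol V * (tm a (-1) 2 0 2 2 0 (B * p') + z + z)
  | 1, 1 => Cvol V * (tm a 1 2 0 0 1 0 (B ^ 2) + tm a 1 3 2 0 0 4 (p' ^ 2) + z)
  | 4, 1 | 1, 4 => Cvol V * (tm a 1 4 0 1 1 0 (B * p') + z + z)
  | 2, 2 => Cvol V * (tm a 1 2 0 0 1 0 (n' * n') + z + z)
  | 3, 2 | 2, 3 => Cvol V * (tm a 1 2 0 0 1 0 (n' * p') + z + z)
  | 3, 3 => Cvol V * (tm a 1 2 0 0 1 0 (p' * p') + z + z)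
  | 4, 4 => Cvol V * (tm a 1 2 0 2 1 0 (p' * p') + z + z)
  | _, _ => Cvol V * (z + z + z)
  end.

Lemma D0 a j m n p : a 0%nat <> 0 -> a 1%nat <> 0 -> (j < 5)%nat ->
  is_derive (fun s => Qa (upd a j s) m n p) (a j) (dQ j a m n p).
Proof.
  intros Hu Hv Hj. unfold Qa, QL, dQ, Aat, Bat, tm.
  destruct j as [|[|[|[|[|j]]]]]; try lia; cbn [upd Nat.eqb];
  auto_derive; nz; try (field; auto).
Qed.

Lemma D1 a i j m n p : a 0%nat <> 0 -> a 1%nat <> 0 -> (i < 5)%nat -> (j < 5)%nat ->
  is_derive (fun s => dQ j (upd a i s) m n p) (a i) (d2Q i j a m n p).
Proof.
  intros Hu Hv Hi Hj. unfold dQ, d2Q, Aat, Bat, tm.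
  destruct i as [|[|[|[|[|i]]]]]; try lia; destruct j as [|[|[|[|[|j]]]]]; try lia; cbn [upd Nat.eqb];
  auto_derive; nz; try (field; auto).
Qed.

Lemma D2 a i j m n p : a 0%nat <> 0 -> a 1%nat <> 0 -> (i < 5)%nat -> (j < 5)%nat ->
  ex_derive (fun s => d2Q i j (upd a i s) m n p) (a i).
Proof.
  intros Hu Hv Hi Hj. unfold d2Q, Aat, Bat, tm.
  destruct i as [|[|[|[|[|i]]]]]; try lia; destruct j as [|[|[|[|[|j]]]]]; try lia; cbn [upd Nat.eqb];
  auto_derive; nz.
Qed.

End Calc.

Definition U (a : nat -> R) : Prop :=
  Rabs (a 0%nat - 1) < 1/10 /\ Rabs (a 1%nat - 1) < 1/10 /\ Rabs (a 2%nat) < 1/10 /\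
  Rabs (a 3%nat - 1/2) < 1/10 /\ Rabs (a 4%nat - 1/2) < 1/10.

Definition sq (m n p : Z) : R := IZR m ^ 2 + IZR n ^ 2 + IZR p ^ 2.

Lemma U_bounds a : U a ->
  9/10 < a 0%nat < 11/10 /\ 9/10 < a 1%nat < 11/10 /\ -1/10 < a 2%nat < 1/10 /\
  2/5 < a 3%nat < 3/5 /\ 2/5 < a 4%nat < 3/5.
Proof.
  intros [H0 [H1 [H2 [H3 H4]]]].
  apply Rabs_def2 in H0, H1, H2, H3, H4. lra.
Qed.

Lemma sq_nonneg m n p : 0 <= sq m n p.
Proof. unfold sq. pose proof (pow2_ge_0 (IZR m)). pose proof (pow2_ge_0 (IZR n)). pose proof (pow2_ge_0 (IZR p)). lra. Qed.

Lemma sq3 a b c : (a + b + c) ^ 2 <= 3 * (a ^ 2 + b ^ 2 + c ^ 2).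
Proof.
  assert (3 * (a ^ 2 + b ^ 2 + c ^ 2) - (a + b + c) ^ 2 = (a - b) ^ 2 + (b - c) ^ 2 + (a - c) ^ 2) by ring.
  pose proof (pow2_ge_0 (a - b)). pose proof (pow2_ge_0 (b - c)). pose proof (pow2_ge_0 (a - c)). lra.
Qed.

Lemma A2_bound a m n p : U a -> Aat a m n p ^ 2 <= 3 * sq m n p.
Proof.
  intros HU. apply U_bounds in HU. unfold Aat, sq.
  eapply Rle_trans; [apply sq3|].
  set (x := a 2%nat) in *. set (y := a 3%nat) in *.
  assert ((x * IZR n) ^ 2 <= IZR n ^ 2) by (rewrite Rpow_mult_distr; assert (x^2 <= 1) by nra; nra).
  assert ((y * IZR p) ^ 2 <= IZR p ^ 2) by (rewrite Rpow_mult_distr; assert (y^2 <= 1) by nra; nra).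
  lra.
Qed.

Lemma B2_bound a m n p : U a -> Bat a m n p ^ 2 <= 3 * sq m n p.
Proof.
  intros HU. apply U_bounds in HU. unfold Bat, sq.
  set (z := a 4%nat) in *.
  assert ((z * IZR p) ^ 2 <= IZR p ^ 2) by (rewrite Rpow_mult_distr; assert (z^2 <= 1) by nra; nra).
  assert ((IZR n + z * IZR p) ^ 2 <= 2 * (IZR n ^ 2 + (z * IZR p) ^ 2)).
  { assert (2 * (IZR n ^ 2 + (z * IZR p) ^ 2) - (IZR n + z * IZR p) ^ 2 = (IZR n - z * IZR p) ^ 2) by ring.
    pose proof (pow2_ge_0 (IZR n - z * IZR p)). lra. }
  pose proof (pow2_ge_0 (IZR m)). pose proof (pow2_ge_0 (IZR n)). pose proof (pow2_ge_0 (IZR p)). lra.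
Qed.

Lemma prod_bound X Y : Rabs (X * Y) <= (X ^ 2 + Y ^ 2) / 2.
Proof. rewrite Rabs_mult.
  assert (E1 : X ^ 2 = Rabs X ^ 2) by (unfold Rabs; destruct Rcase_abs; ring).
  assert (E2 : Y ^ 2 = Rabs Y ^ 2) by (unfold Rabs; destruct Rcase_abs; ring).
  rewrite E1, E2.
  assert (E3 : (Rabs X ^ 2 + Rabs Y ^ 2) / 2 - Rabs X * Rabs Y = (Rabs X - Rabs Y) ^ 2 / 2) by field.
  pose proof (pow2_ge_0 (Rabs X - Rabs Y)). lra. Qed.

Lemma sq_abs X : Rabs (X ^ 2) = X ^ 2.
Proof. apply Rabs_pos_eq. nra. Qed.

Lemma n2_bound m n p : IZR n ^ 2 <= sq m n p.
Proof. unfold sq. pose proof (pow2_ge_0 (IZR m)). pose proof (pow2_ge_0 (IZR n)). pose proof (pow2_ge_0 (IZR p)). lra. Qed.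
Lemma p2_bound m n p : IZR p ^ 2 <= sq m n p.
Proof. unfold sq. pose proof (pow2_ge_0 (IZR m)). pose proof (pow2_ge_0 (IZR n)). pose proof (pow2_ge_0 (IZR p)). lra. Qed.

Ltac atomb HU :=
  match goal with
  | |- _ <= 3 * sq ?m ?n ?p =>
    let a := match type of HU with U ?a => a end in
    pose proof (A2_bound a m n p HU); pose proof (B2_bound a m n p HU);
    pose proof (n2_bound m n p); pose proof (p2_bound m n p); pose proof (sq_nonneg m n p);
    match goal with
    | |- Rabs (_ ^ 2) <= _ => rewrite sq_abs; lra
    | |- Rabs (?X * ?Y) <= _ => eapply Rle_trans; [apply prod_bound|]; lra
    | |- Rabs 0 <= _ => rewrite Rabs_R0; lra
    end
  end.

Lemma pow_le_65 x e : 0 <= x <= 6/5 -> x ^ e <= (6/5) ^ e.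
Proof. intros H. apply pow_incr. lra. Qed.

Lemma tm_bound a sg k e1 e2 e3 e4 X m n p : U a -> Rabs sg <= 1 -> 0 <= k <= 4 ->
  (e1 + e2 + e3 + e4 <= 6)%nat -> Rabs X <= 3 * sq m n p ->
  Rabs (tm a sg k e1 e2 e3 e4 X) <= 36 * sq m n p.
Proof.
  intros HU Hsg Hk He HX. pose proof (U_bounds a HU) as B. unfold tm.
  assert (Hiu : 0 <= / a 0%nat <= 6/5). { split; [left; apply Rinv_0_lt_compat; lra|].
    apply Rle_trans with (/ (9/10)); [apply Rinv_le_contravar; lra|lra]. }
  assert (Hiv : 0 <= / a 1%nat <= 6/5). { split; [left; apply Rinv_0_lt_compat; lra|].
    apply Rle_trans with (/ (9/10)); [apply Rinv_le_contravar; lra|lra]. }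
  set (c := k * a 0%nat ^ e1 * a 1%nat ^ e2 * (/ a 0%nat) ^ e3 * (/ a 1%nat) ^ e4).
  assert (Hc : 0 <= c <= 4 * (6/5) ^ 6).
  { unfold c.
    pose proof (pow_le_65 (a 0%nat) e1 ltac:(lra)). pose proof (pow_le_65 (a 1%nat) e2 ltac:(lra)).
    pose proof (pow_le_65 _ e3 Hiu). pose proof (pow_le_65 _ e4 Hiv).
    pose proof (pow_le (a 0%nat) e1 ltac:(lra)). pose proof (pow_le (a 1%nat) e2 ltac:(lra)).
    pose proof (pow_le _ e3 (proj1 Hiu)). pose proof (pow_le _ e4 (proj1 Hiv)).
    assert (E : (6/5) ^ e1 * (6/5) ^ e2 * (6/5) ^ e3 * (6/5) ^ e4 = (6/5) ^ (e1 + e2 + e3 + e4)) by (rewrite !pow_add; ring).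
    assert ((6/5) ^ (e1 + e2 + e3 + e4) <= (6/5) ^ 6) by (apply Rle_pow; [lra|lia]).
    split.
    - repeat apply Rmult_le_pos; lra.
    - apply Rle_trans with (4 * ((6/5) ^ e1 * (6/5) ^ e2 * (6/5) ^ e3 * (6/5) ^ e4)); [|rewrite E; lra].
      replace (4 * ((6/5) ^ e1 * (6/5) ^ e2 * (6/5) ^ e3 * (6/5) ^ e4)) with
        (4 * (6/5) ^ e1 * (6/5) ^ e2 * (6/5) ^ e3 * (6/5) ^ e4) by ring.
      repeat apply Rmult_le_compat; try lra; repeat apply Rmult_le_pos; try lra;
      apply pow_le; lra. }
  rewrite !Rabs_mult. rewrite (Rabs_pos_eq c) by lra.
  assert (4 * (6/5)^6 <= 12) by (simpl; lra).
  pose proof (Rabs_pos sg). pose proof (Rabs_pos X). pose proof (sq_nonneg m n p).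
  apply Rle_trans with (1 * 12 * (3 * sq m n p)).
  - apply Rmult_le_compat.
    + apply Rmult_le_pos; lra.
    + lra.
    + apply Rmult_le_compat; lra.
    + lra.
  - lra.
Qed.

Lemma sum3_bound t1 t2 t3 K : Rabs t1 <= K -> Rabs t2 <= K -> Rabs t3 <= K -> Rabs (t1 + t2 + t3) <= 3 * K.
Proof. intros. pose proof (Rabs_triang (t1 + t2) t3). pose proof (Rabs_triang t1 t2). lra. Qed.

Ltac tmb HU :=
  apply tm_bound; [exact HU | unfold Rabs; destruct Rcase_abs; lra | lra | simpl; lia | atomb HU].

Lemma dQ_bound V a j m n p : 0 < Cvol V -> U a -> (j < 5)%nat ->
  Rabs (dQ V j a m n p) <= 108 * Cvol V * sq m n p.
Proof.
  intros HC HU Hj.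
  destruct j as [|[|[|[|[|j]]]]]; try lia; unfold dQ; rewrite Rabs_mult, (Rabs_pos_eq (Cvol V)) by lra;
  replace (108 * Cvol V * sq m n p) with (Cvol V * (3 * (36 * sq m n p))) by ring;
  apply Rmult_le_compat_l; try lra; apply sum3_bound; tmb HU.
Qed.

Lemma d2Q_bound V a i j m n p : 0 < Cvol V -> U a -> (i < 5)%nat -> (j < 5)%nat ->
  Rabs (d2Q V i j a m n p) <= 108 * Cvol V * sq m n p.
Proof.
  intros HC HU Hi Hj.
  destruct i as [|[|[|[|[|i]]]]]; try lia; destruct j as [|[|[|[|[|j]]]]]; try lia;
  unfold d2Q; rewrite Rabs_mult, (Rabs_pos_eq (Cvol V)) by lra;
  replace (108 * Cvol V * sq m n p) with (Cvol V * (3 * (36 * sq m n p))) by ring;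
  apply Rmult_le_compat_l; try lra; apply sum3_bound; tmb HU.
Qed.

Lemma Q_low V a m n p : 0 < Cvol V -> U a -> Cvol V / 15 * sq m n p <= Qa V a m n p.
Proof.
  intros HC HU. pose proof (U_bounds a HU) as [[Hu1 Hu2] [[Hv1 Hv2] [[Hx1 Hx2] [[Hy1 Hy2] [Hz1 Hz2]]]]].
  unfold Qa, QL. set (u := a 0%nat) in *. set (v := a 1%nat) in *. set (x := a 2%nat) in *.
  set (y := a 3%nat) in *. set (z := a 4%nat) in *.
  set (M := IZR m) in *. set (Nn := IZR n) in *. set (P := IZR p) in *.
  set (A := M + x * Nn + y * P). set (B := Nn + z * P).
  assert (HA : sq m n p <= 4 * (A ^ 2 + B ^ 2 + P ^ 2)).
  { unfold sq. fold M Nn P.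
    assert (EN : Nn = B - z * P) by (unfold B; ring).
    assert (EM : M = A - x * B + (x * z - y) * P) by (unfold A, B; ring).
    assert (HN : Nn ^ 2 <= 2 * B ^ 2 + 2 * (z * P) ^ 2).
    { rewrite EN. assert (2 * B ^ 2 + 2 * (z * P) ^ 2 - (B - z * P) ^ 2 = (B + z * P) ^ 2) by ring.
      pose proof (pow2_ge_0 (B + z * P)). lra. }
    assert (HM : M ^ 2 <= 3 * (A ^ 2 + (x * B) ^ 2 + ((x * z - y) * P) ^ 2)).
    { rewrite EM. replace (A - x * B + (x * z - y) * P) with (A + (- (x * B)) + (x * z - y) * P) by ring.
      eapply Rle_trans; [apply sq3|]. replace ((- (x * B)) ^ 2) with ((x * B) ^ 2) by ring. lra. }
    assert (H1 : (z * P) ^ 2 <= (9/25) * P ^ 2).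
    { rewrite Rpow_mult_distr. assert (z ^ 2 <= 9/25) by nra. pose proof (pow2_ge_0 P). nra. }
    assert (H2 : (x * B) ^ 2 <= (1/100) * B ^ 2).
    { rewrite Rpow_mult_distr. assert (x ^ 2 <= 1/100) by nra. pose proof (pow2_ge_0 B). nra. }
    assert (H3 : ((x * z - y) * P) ^ 2 <= (1/2) * P ^ 2).
    { rewrite Rpow_mult_distr. assert (-(7/10) <= x * z - y <= 0) by nra.
      assert ((x * z - y) ^ 2 <= 1/2) by nra. pose proof (pow2_ge_0 P). nra. }
    pose proof (pow2_ge_0 A). pose proof (pow2_ge_0 B). pose proof (pow2_ge_0 P). lra. }
  assert (Hv2' : 81/100 <= v ^ 2) by nra.
  assert (Hr : 3/10 <= u ^ 3 / (2 * v ^ 2)).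
  { apply Rmult_le_reg_r with (2 * v ^ 2); [nra|].
    replace (u ^ 3 / (2 * v ^ 2) * (2 * v ^ 2)) with (u ^ 3) by (field; lra).
    assert (729/1000 <= u ^ 3) by (simpl; nra). assert (v ^ 2 <= 121/100) by nra. nra. }
  assert (HB : 3/10 * (A ^ 2 + B ^ 2 + P ^ 2) <= A ^ 2 + v ^ 2 * B ^ 2 + u ^ 3 / (2 * v ^ 2) * P ^ 2).
  { pose proof (pow2_ge_0 A). pose proof (pow2_ge_0 B). pose proof (pow2_ge_0 P). nra. }
  assert (Hsq := sq_nonneg m n p).
  assert (Hiu : 10/11 <= / u). { apply Rle_trans with (/ (11/10)); [lra|apply Rinv_le_contravar; lra]. }
  fold A B.
  set (E := A ^ 2 + v ^ 2 * B ^ 2 + u ^ 3 / (2 * v ^ 2) * P ^ 2) in *.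
  assert (HE : 3/40 * sq m n p <= E) by lra.
  apply Rle_trans with (Cvol V * (10/11) * (3/40 * sq m n p)).
  { replace (Cvol V * (10/11) * (3/40 * sq m n p)) with ((Cvol V * sq m n p) * (30/440)) by field.
    replace (Cvol V / 15 * sq m n p) with ((Cvol V * sq m n p) * (1/15)) by field.
    apply Rmult_le_compat_l; [apply Rmult_le_pos; lra|lra]. }
  unfold Rdiv. apply Rmult_le_compat.
  - apply Rmult_le_pos; lra.
  - lra.
  - apply Rmult_le_compat_l; lra.
  - exact HE.
Qed.

Lemma sq_ge_nrm m n p : nrm m n p ^ 2 <= sq m n p.
Proof.
  unfold nrm, nrmZ, sq.
  assert (Ha : forall z, IZR (Z.abs z) ^ 2 = IZR z ^ 2).
  { intros z. rewrite abs_IZR. unfold Rabs; destruct Rcase_abs; ring. }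
  pose proof (pow2_ge_0 (IZR m)). pose proof (pow2_ge_0 (IZR n)). pose proof (pow2_ge_0 (IZR p)).
  destruct (Z.max_spec (Z.abs m) (Z.max (Z.abs n) (Z.abs p))) as [[_ E]|[_ E]]; rewrite E;
  try (rewrite Ha; lra);
  destruct (Z.max_spec (Z.abs n) (Z.abs p)) as [[_ E']|[_ E']]; rewrite E'; rewrite Ha; lra.
Qed.

Lemma nrm_ge1 m n p N0 : (1 <= N0)%nat -> (Z.of_nat N0 <= nrmZ m n p)%Z -> INR N0 <= nrm m n p /\ 1 <= nrm m n p.
Proof.
  intros H1 H2. unfold nrm. rewrite INR_IZR_INZ. split; apply IZR_le; lia.
Qed.

Definition N0of (r0 lam : R) : nat := S (Z.to_nat (up (r0 / lam))).

Lemma N0of_spec r0 lam : 0 < lam -> 0 < r0 -> r0 <= lam * INR (N0of r0 lam) /\ (1 <= N0of r0 lam)%nat.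
Proof.
  intros Hl Hr. split; [|unfold N0of; lia].
  destruct (archimed (r0 / lam)) as [Hu _].
  assert (0 <= up (r0 / lam))%Z.
  { apply le_IZR. assert (0 < r0 / lam) by (apply Rdiv_lt_0_compat; lra). lra. }
  assert (r0 / lam <= INR (N0of r0 lam)).
  { unfold N0of. rewrite S_INR, INR_IZR_INZ, Z2Nat.id by lia. lra. }
  apply Rmult_le_compat_l with (r := lam) in H0; [|lra].
  replace (lam * (r0 / lam)) with r0 in H0 by (field; lra). exact H0.
Qed.

Lemma TD_term V (phi : R -> R) (e : nat) M eta r0 K (P : Z -> Z -> Z -> R) a :
  0 < Cvol V -> 0 <= M -> 0 < eta -> 0 < r0 -> 0 <= K -> U a ->
  (forall r, r0 <= r -> Rabs (phi r) <= M * Rpower r (- (3/2 + INR e + eta))) ->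
  (forall m n p, Rabs (P m n p) <= K * sq m n p ^ e) ->
  TD (fun m n p => P m n p * phi (Qa V a m n p))
     (K * M * Rpower (Cvol V / 15) (- (3/2 + INR e + eta))) (2 * eta) (N0of r0 (Cvol V / 15)).
Proof.
  intros HC HM Heta Hr0 HK HU Hphi HP.
  set (lam := Cvol V / 15). assert (Hlam : 0 < lam) by (unfold lam; lra).
  destruct (N0of_spec r0 lam Hlam Hr0) as [HN0 HN1].
  set (al := 3/2 + INR e + eta).
  split; [repeat apply Rmult_le_pos; try lra; left; apply Rpower_pos|].
  split; [lra|split; [exact HN1|]].
  intros m n p Hk. destruct (nrm_ge1 m n p _ HN1 Hk) as [Ht1 Ht2].
  set (t := nrm m n p) in *. set (s := sq m n p).
  assert (Hts : t ^ 2 <= s) by apply sq_ge_nrm.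
  assert (Hs : 1 <= s) by nra.
  assert (HQ : lam * s <= Qa V a m n p) by (apply Q_low; auto).
  assert (Hr : r0 <= Qa V a m n p).
  { apply Rle_trans with (lam * INR (N0of r0 lam)); [exact HN0|].
    apply Rle_trans with (lam * s); [|exact HQ]. apply Rmult_le_compat_l; [lra|]. nra. }
  rewrite Rabs_mult.
  assert (Hphi' : Rabs (phi (Qa V a m n p)) <= M * (Rpower lam (- al) * Rpower s (- al))).
  { eapply Rle_trans; [apply Hphi; exact Hr|]. apply Rmult_le_compat_l; [lra|].
    rewrite Rpower_mult_distr by lra. apply Rpower_anti; [nra|exact HQ|]. unfold al. pose proof (pos_INR e). lra. }
  pose proof (HP m n p) as HP'.
  assert (E1 : s ^ e * Rpower s (- al) = Rpower s (- (3/2 + eta))).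
  { rewrite <- (Rpower_pow e s) by lra. rewrite <- Rpower_plus. f_equal. unfold al. ring. }
  assert (E2 : Rpower s (- (3/2 + eta)) <= Rpower t (- (3 + 2 * eta))).
  { apply Rle_trans with (Rpower (t ^ 2) (- (3/2 + eta))).
    - apply Rpower_anti; [nra|exact Hts|lra].
    - right. rewrite <- (Rpower_pow 2 t) by lra. rewrite Rpower_mult. f_equal. change (INR 2) with (1 + 1). field. }
  pose proof (Rabs_pos (P m n p)). pose proof (Rabs_pos (phi (Qa V a m n p))).
  pose proof (Rpower_pos lam (- al)). pose proof (Rpower_pos s (- al)).
  apply Rle_trans with ((K * s ^ e) * (M * (Rpower lam (- al) * Rpower s (- al)))).
  - apply Rmult_le_compat; auto.
  - replace ((K * s ^ e) * (M * (Rpower lam (- al) * Rpower s (- al)))) with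
      (K * M * Rpower lam (- al) * (s ^ e * Rpower s (- al))) by ring.
    rewrite E1. apply Rmult_le_compat_l; [|exact E2].
    repeat apply Rmult_le_pos; lra.
Qed.

Lemma isD_plus (f g : R -> R) x df dg : is_derive f x df -> is_derive g x dg ->
  is_derive (fun s => f s + g s) x (df + dg).
Proof. intros H1 H2. apply (is_derive_plus f g x df dg H1 H2). Qed.

Lemma isD_const (c : R) x : is_derive (fun _ => c) x 0.
Proof. apply (is_derive_const c x). Qed.

Lemma ct_plus (f g : R -> R) x : continuous f x -> continuous g x -> continuous (fun s => f s + g s) x.
Proof. intros; apply (continuous_plus f g x); auto. Qed.

Lemma ct_mult (f g : R -> R) x : continuous f x -> continuous g x -> continuous (fun s => f s * g s) x.
Proof. intros; apply (continuous_mult f g x); auto. Qed.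

Lemma ct_const (c : R) x : continuous (fun _ : R => c) x.
Proof. apply continuous_const. Qed.

Lemma isum_derive lo len (H : R -> Z -> R) (H' : Z -> R) x :
  (forall i, (lo <= i < lo + Z.of_nat len)%Z -> is_derive (fun s => H s i) x (H' i)) ->
  is_derive (fun s => isum lo len (H s)) x (isum lo len H').
Proof.
  revert lo; induction len; intros lo Hd; simpl.
  - apply isD_const.
  - apply isD_plus; [apply Hd; lia|apply IHlen; intros; apply Hd; lia].
Qed.

Lemma isum_cont lo len (H : R -> Z -> R) x :
  (forall i, (lo <= i < lo + Z.of_nat len)%Z -> continuous (fun s => H s i) x) ->
  continuous (fun s => isum lo len (H s)) x.
Proof.
  revert lo; induction len; intros lo Hd; simpl.
  - apply ct_const.
  - apply ct_plus; [apply Hd; lia|apply IHlen; intros; apply Hd; lia].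
Qed.

Lemma box_derive (G G' : R -> Z -> Z -> Z -> R) x N :
  (forall m n p, notorig m n p -> is_derive (fun s => G s m n p) x (G' x m n p)) ->
  is_derive (fun s => box_sum (G s) N) x (box_sum (G' x) N).
Proof.
  intros Hd. apply (is_derive_ext (fun s => cube (z0 (G s)) N)); [intros; rewrite box_cube; reflexivity|].
  rewrite box_cube. unfold cube, zsum.
  apply isum_derive; intros m _. apply isum_derive; intros n _. apply isum_derive; intros p _.
  unfold z0. destruct (Z.eqb m 0 && Z.eqb n 0 && Z.eqb p 0)%bool eqn:E.
  - apply isD_const.
  - apply Hd. intros [-> [-> ->]]. simpl in E. discriminate.
Qed.

Lemma box_cont (G : R -> Z -> Z -> Z -> R) x N :
  (forall m n p, notorig m n p -> continuous (fun s => G s m n p) x) ->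
  continuous (fun s => box_sum (G s) N) x.
Proof.
  intros Hd. eapply (continuous_ext (fun s => cube (z0 (G s)) N)); [intros; rewrite box_cube; reflexivity|].
  unfold cube, zsum.
  apply isum_cont; intros m _. apply isum_cont; intros n _. apply isum_cont; intros p _.
  unfold z0. destruct (Z.eqb m 0 && Z.eqb n 0 && Z.eqb p 0)%bool eqn:E.
  - apply ct_const.
  - apply Hd. intros [-> [-> ->]]. simpl in E. discriminate.
Qed.

Definition Dj (j : nat) (s : R) : Prop := D3pt j - 1/10 < s /\ s < D3pt j + 1/10.

Lemma U_upd b j s : U b -> (j < 5)%nat -> Dj j s -> U (upd b j s).
Proof.
  intros [H0 [H1 [H2 [H3 H4]]]] Hj [Hs1 Hs2].
  destruct j as [|[|[|[|[|j]]]]]; try lia; unfold U, upd; simpl in *;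
  repeat split; auto; apply Rabs_def1; lra.
Qed.

Lemma U_Dj b j : U b -> (j < 5)%nat -> Dj j (b j).
Proof.
  intros HU Hj. pose proof (U_bounds b HU). unfold Dj.
  destruct j as [|[|[|[|[|j]]]]]; try lia; simpl; lra.
Qed.

Lemma upd_same (b : nat -> R) j : upd b j (b j) = b.
Proof. apply functional_extensionality; intros k. unfold upd. destruct (Nat.eqb k j) eqn:E; auto.
  apply Nat.eqb_eq in E; subst; auto. Qed.

Lemma upd_upd (b : nat -> R) j t s : upd (upd b j t) j s = upd b j s.
Proof. apply functional_extensionality; intros k. unfold upd. destruct (Nat.eqb k j); auto. Qed.

Lemma upd_at (b : nat -> R) j s : upd b j s j = s.
Proof. unfold upd. rewrite Nat.eqb_refl. reflexivity. Qed.

Lemma open_Dj j : open (Dj j).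
Proof. apply open_and; [apply open_gt|apply open_lt]. Qed.



Lemma CVU_of_TD (G : R -> Z -> Z -> Z -> R) (D : R -> Prop) c d N0 :
  0 <= c -> 0 < d ->
  (forall x, D x -> TD (G x) c d N0) ->
  CVU_dom (fun n x => box_sum (G x) n) D.
Proof.
  intros Hc Hd HT eps.
  destruct (Rpower_small d (eps / (26 * c / d + 1)) Hd) as [N1 [_ HN1]].
  { apply Rdiv_lt_0_compat; [apply cond_pos|]. assert (0 <= 26 * c / d) by (unfold Rdiv; apply Rmult_le_pos; [lra|left; apply Rinv_0_lt_compat; lra]). lra. }
  exists (N0 + N1)%nat. intros n Hn x Hx.
  destruct (TD_conv _ _ _ _ (HT x Hx)) as [_ B]. specialize (B n ltac:(lia)).
  change (Lim_seq (fun n0 => box_sum (G x) n0)) with (Lim_seq (box_sum (G x))).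
  change (real (Lim_seq (box_sum (G x)))) with (lattice_sum (G x)).
  rewrite Rabs_minus_sym. eapply Rle_lt_trans; [exact B|].
  specialize (HN1 n ltac:(lia)).
  assert (HK : 0 <= 26 * c / d) by (unfold Rdiv; apply Rmult_le_pos; [lra|left; apply Rinv_0_lt_compat; lra]).
  pose proof (Rpower_pos (INR n) (- d)). pose proof (cond_pos eps).
  apply Rle_lt_trans with ((26 * c / d + 1) * Rpower (INR n) (- d)); [nra|].
  apply Rmult_lt_compat_l with (r := 26 * c / d + 1) in HN1; [|lra].
  replace ((26 * c / d + 1) * (eps / (26 * c / d + 1))) with (pos eps) in HN1 by (field; lra). exact HN1.
Qed.

Lemma deriv_ls (Fam Fam' : (nat -> R) -> Z -> Z -> Z -> R) (j : nat) (b : nat -> R) c d N0 :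
  (j < 5)%nat -> U b ->
  (forall a, U a -> TD (Fam a) c d N0 /\ TD (Fam' a) c d N0) ->
  (forall a m n p, U a -> notorig m n p -> is_derive (fun s => Fam (upd a j s) m n p) (a j) (Fam' a m n p)) ->
  (forall a m n p, U a -> notorig m n p -> continuous (fun s => Fam' (upd a j s) m n p) (a j)) ->
  is_derive (fun s => lattice_sum (Fam (upd b j s))) (b j) (lattice_sum (Fam' b)).
Proof.
  intros Hj HU HT Hder Hcont.
  assert (HUs : forall s, Dj j s -> U (upd b j s)) by (intros; apply U_upd; auto).
  pose proof (HT b HU) as [[Hc [Hd _]] _].
  set (fn := fun n s => box_sum (Fam (upd b j s)) n).
  assert (Hfd : forall n x, Dj j x -> is_derive (fn n) x (box_sum (Fam' (upd b j x)) n)).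
  { intros n x Hx. unfold fn. apply (box_derive (fun s => Fam (upd b j s)) (fun s => Fam' (upd b j s))).
    intros m n' p Hmnp. specialize (Hder (upd b j x) m n' p (HUs x Hx) Hmnp).
    rewrite upd_at in Hder. eapply is_derive_ext; [|exact Hder]. intros t; cbv beta. rewrite upd_upd. reflexivity. }
  assert (HD : forall n x, Dj j x -> Derive (fn n) x = box_sum (Fam' (upd b j x)) n).
  { intros; apply is_derive_unique; auto. }
  pose proof (CVU_Derive fn (Dj j) (open_Dj j)) as C.
  assert (Hconn : is_connected (Dj j)) by (intros x y z Hx Hy Hz; unfold Dj in *; lra).
  specialize (C Hconn).
  assert (Hcvu1 : CVU_dom fn (Dj j)).
  { apply (CVU_of_TD (fun s => Fam (upd b j s)) (Dj j) c d N0); auto. intros x Hx. apply (HT _ (HUs x Hx)). }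
  specialize (C Hcvu1).
  assert (Hex : forall n x, Dj j x -> ex_derive (fn n) x) by (intros; eexists; apply Hfd; auto).
  specialize (C Hex).
  assert (Hct : forall n x, Dj j x -> continuity_pt (Derive (fn n)) x).
  { intros n x Hx.
    apply (continuity_pt_ext_loc (fun y => box_sum (Fam' (upd b j y)) n)).
    - apply (locally_open (Dj j)); [apply open_Dj| |exact Hx]. intros y Hy. symmetry; apply HD; auto.
    - apply continuity_pt_filterlim. apply (box_cont (fun s => Fam' (upd b j s)) x n). intros m n' p Hmnp.
      specialize (Hcont (upd b j x) m n' p (HUs x Hx) Hmnp). rewrite upd_at in Hcont.
      eapply continuous_ext; [|exact Hcont]. intros t; cbv beta. rewrite upd_upd. reflexivity. }
  specialize (C Hct).
  assert (Hcvu2 : CVU_dom (fun n x => Derive (fn n) x) (Dj j)).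
  { intros eps. destruct (CVU_of_TD (fun s => Fam' (upd b j s)) (Dj j) c d N0 Hc Hd) with (eps := eps) as [N HN].
    - intros x Hx. apply (HT _ (HUs x Hx)).
    - exists N. intros n Hn x Hx. rewrite HD by auto.
      rewrite (Lim_seq_ext _ (fun n0 => box_sum (Fam' (upd b j x)) n0)) by (intros; apply HD; auto).
      apply HN; auto. }
  specialize (C Hcvu2 (b j) (U_Dj b j HU Hj)).
  rewrite (Lim_seq_ext _ (fun n0 => box_sum (Fam' (upd b j (b j))) n0)) in C by (intros; apply HD; apply U_Dj; auto).
  rewrite upd_same in C. exact C.
Qed.

Lemma Cvol_pos V : 0 < V -> 0 < Cvol V.
Proof. intros H. unfold Cvol. apply Rmult_lt_0_compat; apply Rpower_pos. Qed.



Lemma Rpower_exp_mono r e1 e2 : 1 <= r -> e1 <= e2 -> Rpower r (- e2) <= Rpower r (- e1).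
Proof. intros Hr He. apply Rle_Rpower; lra. Qed.

Lemma decay_common f : in_F f -> exists eta M r0, 0 < eta /\ 0 <= M /\ 0 < r0 /\
  forall r, r0 <= r ->
    Rabs (f r) <= M * Rpower r (- (3/2 + INR 0 + eta)) /\
    Rabs (Derive f r) <= M * Rpower r (- (3/2 + INR 1 + eta)) /\
    Rabs (Derive (Derive f) r) <= M * Rpower r (- (3/2 + INR 2 + eta)).
Proof.
  intros [_ [[e0 [M0 [r0 [He0 [Hr0 H0]]]]] [[e1 [M1 [r1 [He1 [Hr1 H1]]]]] [e2 [M2 [r2 [He2 [Hr2 H2]]]]]]]].
  exists (Rmin e0 (Rmin e1 e2)), (Rabs M0 + Rabs M1 + Rabs M2), (Rmax 1 (Rmax r0 (Rmax r1 r2))).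
  assert (Hm : 0 < Rmin e0 (Rmin e1 e2)) by (repeat apply Rmin_glb_lt; lra).
  split; [exact Hm|]. split; [pose proof (Rabs_pos M0); pose proof (Rabs_pos M1); pose proof (Rabs_pos M2); lra|].
  split; [pose proof (Rmax_l 1 (Rmax r0 (Rmax r1 r2))); lra|].
  intros r Hr.
  assert (H1r : 1 <= r) by (pose proof (Rmax_l 1 (Rmax r0 (Rmax r1 r2))); lra).
  assert (Hr0' : r0 <= r) by (pose proof (Rmax_r 1 (Rmax r0 (Rmax r1 r2))); pose proof (Rmax_l r0 (Rmax r1 r2)); lra).
  assert (Hr1' : r1 <= r) by (pose proof (Rmax_r 1 (Rmax r0 (Rmax r1 r2))); pose proof (Rmax_r r0 (Rmax r1 r2)); pose proof (Rmax_l r1 r2); lra).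
  assert (Hr2' : r2 <= r) by (pose proof (Rmax_r 1 (Rmax r0 (Rmax r1 r2))); pose proof (Rmax_r r0 (Rmax r1 r2)); pose proof (Rmax_r r1 r2); lra).
  pose proof (Rmin_l e0 (Rmin e1 e2)). pose proof (Rmin_r e0 (Rmin e1 e2)).
  pose proof (Rmin_l e1 e2). pose proof (Rmin_r e1 e2).
  set (e := Rmin e0 (Rmin e1 e2)) in *.
  assert (G : forall g M' k e', (Rabs (g r) <= M' * Rpower r (- (3/2 + INR k + e'))) -> e <= e' ->
     Rabs (g r) <= (Rabs M0 + Rabs M1 + Rabs M2) * Rpower r (- (3/2 + INR k + e)) -> True) by auto.
  clear G.
  assert (W : forall M' k e', Rabs M' <= Rabs M0 + Rabs M1 + Rabs M2 -> e <= e' ->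
     M' * Rpower r (- (3/2 + INR k + e')) <= (Rabs M0 + Rabs M1 + Rabs M2) * Rpower r (- (3/2 + INR k + e))).
  { intros M' k e' HM He'. pose proof (Rpower_pos r (- (3/2 + INR k + e'))).
    assert (Rpower r (- (3/2 + INR k + e')) <= Rpower r (- (3/2 + INR k + e))) by (apply Rpower_exp_mono; lra).
    pose proof (Rle_abs M'). pose proof (Rpower_pos r (- (3/2 + INR k + e))).
    apply Rle_trans with (Rabs M' * Rpower r (- (3/2 + INR k + e'))); [apply Rmult_le_compat_r; lra|].
    apply Rmult_le_compat; [apply Rabs_pos|lra|lra|lra]. }
  pose proof (Rabs_pos M0). pose proof (Rabs_pos M1). pose proof (Rabs_pos M2).
  split; [|split].
  - eapply Rle_trans; [apply H0; lra|]. apply W; lra.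
  - eapply Rle_trans; [apply H1; lra|]. apply W; lra.
  - eapply Rle_trans; [apply H2; lra|]. apply W; lra.
Qed.

Definition F0 V (f : R -> R) a : Z -> Z -> Z -> R := fun m n p => f (Qa V a m n p).
Definition F1 V (f : R -> R) j a : Z -> Z -> Z -> R := fun m n p => dQ V j a m n p * Derive f (Qa V a m n p).
Definition F2 V (f : R -> R) i j a : Z -> Z -> Z -> R := fun m n p =>
  dQ V i a m n p * dQ V j a m n p * Derive (Derive f) (Qa V a m n p) + d2Q V i j a m n p * Derive f (Qa V a m n p).

Lemma sq_ge1 m n p : notorig m n p -> 1 <= sq m n p.
Proof.
  intros H. unfold sq.
  assert (G : forall z : Z, z <> 0%Z -> 1 <= IZR z ^ 2).
  { intros z Hz. replace (IZR z ^ 2) with (IZR (z * z)) by (rewrite mult_IZR; ring). apply IZR_le. nia. }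
  pose proof (pow2_ge_0 (IZR m)). pose proof (pow2_ge_0 (IZR n)). pose proof (pow2_ge_0 (IZR p)).
  destruct (Z.eq_dec m 0) as [Em|Em]; [destruct (Z.eq_dec n 0) as [En|En]; [destruct (Z.eq_dec p 0) as [Ep|Ep]|]|].
  - exfalso; apply H; auto.
  - pose proof (G p Ep). lra.
  - pose proof (G n En). lra.
  - pose proof (G m Em). lra.
Qed.

Lemma Q_pos V a m n p : 0 < Cvol V -> U a -> notorig m n p -> 0 < Qa V a m n p.
Proof.
  intros HC HU Hk. pose proof (Q_low V a m n p HC HU). pose proof (sq_ge1 m n p Hk).
  assert (0 < Cvol V / 15 * sq m n p) by (apply Rmult_lt_0_compat; lra). lra.
Qed.

Lemma fam_TD V f : 0 < V -> in_F f -> exists c d N0, forall a, U a -> forall i j, (i < 5)%nat -> (j < 5)%nat ->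
  TD (F0 V f a) c d N0 /\ TD (F1 V f j a) c d N0 /\ TD (F2 V f i j a) c d N0.
Proof.
  intros HV Hf. pose proof (Cvol_pos V HV) as HC.
  destruct (decay_common f Hf) as [eta [M [r0 [Heta [HM [Hr0 Hdec]]]]]].
  set (lam := Cvol V / 15).
  set (cK := fun (e : nat) K => K * M * Rpower lam (- (3/2 + INR e + eta))).
  assert (HcK : forall e K, 0 <= K -> 0 <= cK e K) by (intros; unfold cK; repeat apply Rmult_le_pos; auto; left; apply Rpower_pos).
  set (K1 := 108 * Cvol V).
  assert (HK1 : 0 <= K1) by (unfold K1; lra).
  exists (cK 0%nat 1 + cK 1%nat K1 + cK 2%nat (K1 ^ 2) + cK 1%nat K1), (2 * eta), (N0of r0 lam).
  intros a HU i j Hi Hj.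
  pose proof (HcK 0%nat 1 ltac:(lra)). pose proof (HcK 1%nat K1 HK1). pose proof (HcK 2%nat (K1 ^ 2) ltac:(apply pow_le; lra)).
  assert (T0 : TD (F0 V f a) (cK 0%nat 1) (2 * eta) (N0of r0 lam)).
  { eapply TD_ext.
    - apply (TD_term V f 0 M eta r0 1 (fun _ _ _ => 1) a); auto; try lra.
      + intros r Hr; apply (Hdec r Hr).
      + intros; simpl. rewrite Rabs_R1; lra.
    - intros; unfold F0; ring. }
  assert (T1 : forall j, (j < 5)%nat -> TD (F1 V f j a) (cK 1%nat K1) (2 * eta) (N0of r0 lam)).
  { intros j' Hj'. eapply TD_ext.
    - apply (TD_term V (Derive f) 1 M eta r0 K1 (dQ V j' a) a); auto.
      + intros r Hr; apply (Hdec r Hr).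
      + intros; rewrite pow_1. unfold K1. apply dQ_bound; auto.
    - intros; unfold F1; ring. }
  assert (T2 : TD (fun m n p => dQ V i a m n p * dQ V j a m n p * Derive (Derive f) (Qa V a m n p)) (cK 2%nat (K1 ^ 2)) (2 * eta) (N0of r0 lam)).
  { apply (TD_term V (Derive (Derive f)) 2 M eta r0 (K1 ^ 2) (fun m n p => dQ V i a m n p * dQ V j a m n p) a); auto.
    - apply pow_le; lra.
    - intros r Hr; apply (Hdec r Hr).
    - intros. rewrite Rabs_mult. pose proof (dQ_bound V a i m n p HC HU Hi). pose proof (dQ_bound V a j m n p HC HU Hj).
      replace (K1 ^ 2 * sq m n p ^ 2) with ((108 * Cvol V * sq m n p) * (108 * Cvol V * sq m n p)) by (unfold K1; ring).
      apply Rmult_le_compat; auto; apply Rabs_pos. }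
  assert (T3 : TD (fun m n p => d2Q V i j a m n p * Derive f (Qa V a m n p)) (cK 1%nat K1) (2 * eta) (N0of r0 lam)).
  { apply (TD_term V (Derive f) 1 M eta r0 K1 (d2Q V i j a) a); auto.
    - intros r Hr; apply (Hdec r Hr).
    - intros; rewrite pow_1. unfold K1. apply d2Q_bound; auto. }
  split; [|split].
  - eapply TD_mono; [exact T0| |lia]. lra.
  - eapply TD_mono; [apply T1; exact Hj| |lia]. lra.
  - eapply TD_mono; [eapply TD_ext; [apply (TD_plus _ _ _ _ _ _ _ T2 T3)|]| |].
    + intros; unfold F2; reflexivity.
    + lra.
    + lia.
Qed.

Lemma U_nz a : U a -> a 0%nat <> 0 /\ a 1%nat <> 0.
Proof. intros HU. pose proof (U_bounds a HU). split; lra. Qed.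

Lemma ct_of_isD (g : R -> R) x l : is_derive g x l -> continuous g x.
Proof. intros H. exact (ex_derive_continuous g x (ex_intro _ l H)). Qed.
Lemma ct_of_exD (g : R -> R) x : ex_derive g x -> continuous g x.
Proof. intros H. exact (ex_derive_continuous g x H). Qed.

Lemma ct_compQ V (phi : R -> R) a j m n p : U a -> (j < 5)%nat -> 0 < Cvol V -> notorig m n p ->
  continuous phi (Qa V a m n p) ->
  continuous (fun s => phi (Qa V (upd a j s) m n p)) (a j).
Proof.
  intros HU Hj HC Hk Hphi. destruct (U_nz a HU) as [Hu Hv].
  apply (continuous_comp (fun s => Qa V (upd a j s) m n p) phi).
  - apply (ct_of_isD _ _ _ (D0 V a j m n p Hu Hv Hj)).
  - cbv beta. rewrite upd_same. exact Hphi.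
Qed.

Lemma is_derive_val (g : R -> R) x l l' : is_derive g x l -> l = l' -> is_derive g x l'.
Proof. intros H ->; exact H. Qed.

Lemma step1 V f b j : 0 < V -> in_F f -> (j < 5)%nat -> U b ->
  is_derive (fun s => Ef V f (upd b j s)) (b j) (lattice_sum (F1 V f j b)).
Proof.
  intros HV Hf Hj HU. pose proof (Cvol_pos V HV) as HC.
  destruct (fam_TD V f HV Hf) as [c [d [N0 HT]]].
  destruct Hf as [Hsm _].
  apply (deriv_ls (F0 V f) (F1 V f j) j b c d N0); auto.
  - intros a Ha. destruct (HT a Ha 0%nat j ltac:(lia) Hj) as [T0 [T1 _]]. auto.
  - intros a m n p Ha Hk. destruct (U_nz a Ha) as [Hu Hv]. unfold F0, F1.
    pose proof (D0 V a j m n p Hu Hv Hj) as HD.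
    assert (Hf' : is_derive f (Qa V (upd a j (a j)) m n p) (Derive f (Qa V a m n p))).
    { rewrite upd_same. apply Derive_correct. apply Hsm. apply Q_pos; auto. }
    pose proof (is_derive_comp f (fun s => Qa V (upd a j s) m n p) (a j) _ _ Hf' HD) as H.
    exact H.
  - intros a m n p Ha Hk. destruct (U_nz a Ha) as [Hu Hv]. unfold F1.
    apply ct_mult.
    + apply (ct_of_isD _ _ _ (D1 V a j j m n p Hu Hv Hj Hj)).
    + apply ct_compQ; auto. apply ct_of_exD. apply Hsm. apply Q_pos; auto.
Qed.

Lemma step2 V f a i j : 0 < V -> in_F f -> (i < 5)%nat -> (j < 5)%nat -> U a ->
  is_derive (fun t => lattice_sum (F1 V f j (upd a i t))) (a i) (lattice_sum (F2 V f i j a)).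
Proof.
  intros HV Hf Hi Hj HU. pose proof (Cvol_pos V HV) as HC.
  destruct (fam_TD V f HV Hf) as [c [d [N0 HT]]].
  destruct Hf as [Hsm _].
  apply (deriv_ls (F1 V f j) (F2 V f i j) i a c d N0); auto.
  - intros b Hb. destruct (HT b Hb i j Hi Hj) as [_ [T1 T2]]. auto.
  - intros b m n p Hb Hk. destruct (U_nz b Hb) as [Hu Hv]. unfold F1, F2.
    pose proof (D0 V b i m n p Hu Hv Hi) as HDi.
    pose proof (D1 V b i j m n p Hu Hv Hi Hj) as HDij.
    assert (Hf1 : is_derive (Derive f) (Qa V (upd b i (b i)) m n p) (Derive (Derive f) (Qa V b m n p))).
    { rewrite upd_same. apply Derive_correct. apply Hsm. apply Q_pos; auto. }
    pose proof (is_derive_comp (Derive f) (fun s => Qa V (upd b i s) m n p) (b i) _ _ Hf1 HDi) as Hc.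
    pose proof (is_derive_mult (fun s => dQ V j (upd b i s) m n p) (fun s => Derive f (Qa V (upd b i s) m n p)) (b i) _ _ HDij Hc) as Hm.
    specialize (Hm ltac:(intros; apply Rmult_comm)).
    cbv beta in Hm. rewrite upd_same in Hm.
    eapply is_derive_val; [exact Hm|]. unfold plus, mult, scal; simpl. unfold mult; simpl. ring.
  - intros b m n p Hb Hk. destruct (U_nz b Hb) as [Hu Hv]. unfold F2.
    assert (Hq : 0 < Qa V b m n p) by (apply Q_pos; auto).
    apply ct_plus; apply ct_mult; [apply ct_mult| | |].
    + apply (ct_of_isD _ _ _ (D1 V b i i m n p Hu Hv Hi Hi)).
    + apply (ct_of_isD _ _ _ (D1 V b i j m n p Hu Hv Hi Hj)).
    + apply ct_compQ; auto. apply Hsm; auto.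
    + apply ct_of_exD. apply (D2 V b i j m n p Hu Hv Hi Hj).
    + apply ct_compQ; auto. apply ct_of_exD. apply Hsm; auto.
Qed.


Lemma U_D3 : U D3pt.
Proof. unfold U, D3pt; repeat split; apply Rabs_def1; lra. Qed.

Lemma step3 V f i j : 0 < V -> in_F f -> (i < 5)%nat -> (j < 5)%nat ->
  second_partial (Ef V f) D3pt i j (lattice_sum (F2 V f i j D3pt)).
Proof.
  intros HV Hf Hi Hj. unfold second_partial.
  apply (is_derive_ext_loc (fun t => lattice_sum (F1 V f j (upd D3pt i t)))).
  - apply (locally_open (Dj i)); [apply open_Dj| |apply U_Dj; [apply U_D3|exact Hi]].
    intros t Ht. cbv zeta. symmetry. apply is_derive_unique. apply step1; auto.
    apply U_upd; auto. apply U_D3.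
  - apply step2; auto. apply U_D3.
Qed.

Definition qi (i : nat) (m n p : Z) : R :=
  let M := IZR m in let Nn := IZR n in let P := IZR p in
  let A := M + P / 2 in let B := Nn + P / 2 in
  match i with
  | 0 => - A ^ 2 - B ^ 2 + P ^ 2
  | 1 => 2 * B ^ 2 - P ^ 2
  | 2 => 2 * A * Nn
  | 3 => 2 * A * P
  | 4 => 2 * B * P
  | _ => 0
  end.

Definition qij (i j : nat) (m n p : Z) : R :=
  let M := IZR m in let Nn := IZR n in let P := IZR p in
  let A := M + P / 2 in let B := Nn + P / 2 in
  match i, j with
  | 0, 0 => 2 * A ^ 2 + 2 * B ^ 2 + P ^ 2
  | 1, 0 | 0, 1 => - 2 * B ^ 2 - 2 * P ^ 2
  | 2, 0 | 0, 2 => - 2 * A * Nn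
  | 3, 0 | 0, 3 => - 2 * A * P
  | 4, 0 | 0, 4 => - 2 * B * P
  | 1, 1 => 2 * B ^ 2 + 3 * P ^ 2
  | 4, 1 | 1, 4 => 4 * B * P
  | 2, 2 => 2 * Nn ^ 2
  | 3, 2 | 2, 3 => 2 * Nn * P
  | 3, 3 => 2 * P ^ 2
  | 4, 4 => 2 * P ^ 2
  | _, _ => 0
  end.

Lemma Q_D3 V m n p : Qa V D3pt m n p = Cvol V * Rq m n p.
Proof. unfold Qa, QL, D3pt, Rq. field. Qed.

Lemma dQ_D3 V i m n p : (i < 5)%nat -> dQ V i D3pt m n p = Cvol V * qi i m n p.
Proof.
  intros Hi. unfold dQ, qi, tm, Aat, Bat, D3pt.
  destruct i as [|[|[|[|[|i]]]]]; try lia; simpl; field.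
Qed.

Lemma d2Q_D3 V i j m n p : (i < 5)%nat -> (j < 5)%nat -> d2Q V i j D3pt m n p = Cvol V * qij i j m n p.
Proof.
  intros Hi Hj. unfold d2Q, qij, tm, Aat, Bat, D3pt.
  destruct i as [|[|[|[|[|i]]]]]; try lia; destruct j as [|[|[|[|[|j]]]]]; try lia; simpl; field.
Qed.

Lemma qi_bound V i m n p : 0 < Cvol V -> (i < 5)%nat -> Rabs (qi i m n p) <= 108 * sq m n p.
Proof.
  intros HC Hi. pose proof (dQ_bound V D3pt i m n p HC U_D3 Hi) as H.
  rewrite dQ_D3, Rabs_mult, (Rabs_pos_eq (Cvol V)) in H by (auto; lra).
  apply Rmult_le_reg_l with (Cvol V); [exact HC|]. lra.
Qed.

Lemma qij_bound V i j m n p : 0 < Cvol V -> (i < 5)%nat -> (j < 5)%nat -> Rabs (qij i j m n p) <= 108 * sq m n p.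
Proof.
  intros HC Hi Hj. pose proof (d2Q_bound V D3pt i j m n p HC U_D3 Hi Hj) as H.
  rewrite d2Q_D3, Rabs_mult, (Rabs_pos_eq (Cvol V)) in H by (auto; lra).
  apply Rmult_le_reg_l with (Cvol V); [exact HC|]. lra.
Qed.

Lemma Rq_nonneg m n p : 0 <= Rq m n p.
Proof.
  unfold Rq. set (M := IZR m); set (Nn := IZR n); set (P := IZR p).
  assert (M ^ 2 + Nn ^ 2 + P ^ 2 + M * P + Nn * P = (M + P/2) ^ 2 + (Nn + P/2) ^ 2 + P ^ 2 / 2) by field.
  pose proof (pow2_ge_0 (M + P/2)). pose proof (pow2_ge_0 (Nn + P/2)). pose proof (pow2_ge_0 P). lra.
Qed.

Lemma Rq_bound m n p : Rabs (Rq m n p) <= 2 * sq m n p.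
Proof.
  rewrite Rabs_pos_eq by apply Rq_nonneg. unfold Rq, sq.
  set (M := IZR m); set (Nn := IZR n); set (P := IZR p).
  assert (2 * (M ^ 2 + Nn ^ 2 + P ^ 2) - (M ^ 2 + Nn ^ 2 + P ^ 2 + M * P + Nn * P) =
     (M - P/2) ^ 2 + (Nn - P/2) ^ 2 + P ^ 2 / 2) by field.
  pose proof (pow2_ge_0 (M - P/2)). pose proof (pow2_ge_0 (Nn - P/2)). pose proof (pow2_ge_0 P). lra.
Qed.

Lemma Tq_bound m n p : Rabs (Tq m n p) <= 2 * sq m n p ^ 2.
Proof.
  unfold Tq. pose proof (sq_nonneg m n p). unfold sq in *.
  set (M := IZR m) in *; set (Nn := IZR n) in *; set (P := IZR p) in *.
  replace (M * Nn * (M + P) * (Nn + P)) with ((M * Nn) * ((M + P) * (Nn + P))) by ring.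
  rewrite Rabs_mult. pose proof (prod_bound M Nn). pose proof (prod_bound (M + P) (Nn + P)).
  assert ((M + P) ^ 2 + (Nn + P) ^ 2 <= 4 * (M ^ 2 + Nn ^ 2 + P ^ 2)).
  { assert (4 * (M ^ 2 + Nn ^ 2 + P ^ 2) - ((M + P) ^ 2 + (Nn + P) ^ 2) = (M - P) ^ 2 + (Nn - P) ^ 2 + 2 * M ^ 2 + 2 * Nn ^ 2) by ring.
    pose proof (pow2_ge_0 (M - P)). pose proof (pow2_ge_0 (Nn - P)). pose proof (pow2_ge_0 M). pose proof (pow2_ge_0 Nn). lra. }
  assert (M ^ 2 + Nn ^ 2 <= M ^ 2 + Nn ^ 2 + P ^ 2) by (pose proof (pow2_ge_0 P); lra).
  pose proof (Rabs_pos (M * Nn)). pose proof (Rabs_pos ((M + P) * (Nn + P))).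
  apply Rle_trans with (((M ^ 2 + Nn ^ 2 + P ^ 2) / 2) * (2 * (M ^ 2 + Nn ^ 2 + P ^ 2))).
  - apply Rmult_le_compat; auto; lra.
  - simpl. nra.
Qed.

Lemma TDe_D3 V (phi : R -> R) (e : nat) (P : Z -> Z -> Z -> R) K :
  0 < V -> 0 <= K ->
  (exists M eta r0, 0 <= M /\ 0 < eta /\ 0 < r0 /\ forall r, r0 <= r -> Rabs (phi r) <= M * Rpower r (- (3/2 + INR e + eta))) ->
  (forall m n p, Rabs (P m n p) <= K * sq m n p ^ e) ->
  TDe (fun m n p => P m n p * phi (Cvol V * Rq m n p)).
Proof.
  intros HV HK [M [eta [r0 [HM [Heta [Hr0 Hphi]]]]]] HP.
  pose proof (TD_term V phi e M eta r0 K P D3pt (Cvol_pos V HV) HM Heta Hr0 HK U_D3 Hphi HP) as T.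
  eexists; eexists; eexists. eapply TD_ext; [exact T|]. intros; cbv beta. rewrite Q_D3. reflexivity.
Qed.

Lemma decay_ex f : in_F f ->
  (exists M eta r0, 0 <= M /\ 0 < eta /\ 0 < r0 /\ forall r, r0 <= r -> Rabs (Derive f r) <= M * Rpower r (- (3/2 + INR 1 + eta))) /\
  (exists M eta r0, 0 <= M /\ 0 < eta /\ 0 < r0 /\ forall r, r0 <= r -> Rabs (Derive (Derive f) r) <= M * Rpower r (- (3/2 + INR 2 + eta))).
Proof.
  intros Hf. destruct (decay_common f Hf) as [eta [M [r0 [He [HM [Hr H]]]]]].
  split; exists M, eta, r0; repeat split; auto; intros r Hr'; apply (H r Hr').
Qed.

Lemma F2_value V f i j a b c : 0 < V -> in_F f -> (i < 5)%nat -> (j < 5)%nat ->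
  (forall m n p, / 12 * lsum G12 (fun m n p => qi i m n p * qi j m n p) m n p = a * Rq m n p ^ 2 + b * Tq m n p) ->
  (forall m n p, / 12 * lsum G12 (qij i j) m n p = c * Rq m n p) ->
  lattice_sum (F2 V f i j D3pt) =
    Cvol V ^ 2 * (a * lattice_sum (fun m n p => Rq m n p ^ 2 * Derive (Derive f) (Cvol V * Rq m n p))
                + b * lattice_sum (fun m n p => Tq m n p * Derive (Derive f) (Cvol V * Rq m n p)))
    + Cvol V * (c * lattice_sum (fun m n p => Rq m n p * Derive f (Cvol V * Rq m n p))).
Proof.
  intros HV Hf Hi Hj Hq Hq2. pose proof (Cvol_pos V HV) as HC.
  destruct (decay_ex f Hf) as [D1' D2'].
  set (C := Cvol V) in *.
  assert (Tqq : TDe (fun m n p => (qi i m n p * qi j m n p) * Derive (Derive f) (C * Rq m n p))).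
  { apply (TDe_D3 V _ 2 _ (108 ^ 2)); auto; [lra|]. intros. rewrite Rabs_mult.
    pose proof (qi_bound V i m n p HC Hi). pose proof (qi_bound V j m n p HC Hj).
    replace (108 ^ 2 * sq m n p ^ 2) with ((108 * sq m n p) * (108 * sq m n p)) by ring.
    apply Rmult_le_compat; auto; apply Rabs_pos. }
  assert (Tq2 : TDe (fun m n p => qij i j m n p * Derive f (C * Rq m n p))).
  { apply (TDe_D3 V _ 1 _ 108); auto; [lra|]. intros. rewrite pow_1. apply (qij_bound V); auto. }
  assert (TR2 : TDe (fun m n p => Rq m n p ^ 2 * Derive (Derive f) (C * Rq m n p))).
  { apply (TDe_D3 V _ 2 _ 4); auto; [lra|]. intros. rewrite <- RPow_abs.
    pose proof (Rq_bound m n p). pose proof (Rabs_pos (Rq m n p)).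
    replace (4 * sq m n p ^ 2) with ((2 * sq m n p) ^ 2) by ring. apply pow_incr; lra. }
  assert (TT : TDe (fun m n p => Tq m n p * Derive (Derive f) (C * Rq m n p))).
  { apply (TDe_D3 V _ 2 _ 2); auto; [lra|]. intros. apply Tq_bound. }
  assert (TR : TDe (fun m n p => Rq m n p * Derive f (C * Rq m n p))).
  { apply (TDe_D3 V _ 1 _ 2); auto; [lra|]. intros. rewrite pow_1. apply Rq_bound. }
  rewrite (ls_ext _ (fun m n p => C ^ 2 * ((qi i m n p * qi j m n p) * Derive (Derive f) (C * Rq m n p))
                                 + C * (qij i j m n p * Derive f (C * Rq m n p)))).
  2:{ intros m n p _. unfold F2. rewrite !dQ_D3, d2Q_D3, Q_D3 by auto. fold C. ring. }
  rewrite ls_plus by (apply TDe_scal; auto).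
  rewrite !ls_scal by auto.
  rewrite (avg_poly (fun m n p => qi i m n p * qi j m n p) (fun r => Derive (Derive f) (C * r)) Tqq).
  rewrite (avg_poly (qij i j) (fun r => Derive f (C * r)) Tq2).
  rewrite (ls_ext _ (fun m n p => a * (Rq m n p ^ 2 * Derive (Derive f) (C * Rq m n p)) + b * (Tq m n p * Derive (Derive f) (C * Rq m n p))))
    by (intros; rewrite Hq; ring).
  rewrite (ls_ext (fun m n p => / 12 * lsum G12 (qij i j) m n p * Derive f (C * Rq m n p))
                  (fun m n p => c * (Rq m n p * Derive f (C * Rq m n p))))
    by (intros; rewrite Hq2; ring).
  rewrite ls_plus by (apply TDe_scal; auto).
  rewrite !ls_scal by auto. reflexivity.
Qed.

Ltac polyid := intros m n p; unfold lsum, G12; cbn [fold_right]; unfold act;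
  cbn [el0 el1 el2 el3 el4 el5 el6 el7 el8 el9 el10 el11];
  unfold qi, qij, Rq, Tq; cbv zeta; pushIZR; field.

Definition S1v V f := lattice_sum (fun m n p => Rq m n p ^ 2 * Derive (Derive f) (Cvol V * Rq m n p)).
Definition S2v V f := lattice_sum (fun m n p => Rq m n p * Derive f (Cvol V * Rq m n p)).
Definition S3v V f := lattice_sum (fun m n p => Tq m n p * Derive (Derive f) (Cvol V * Rq m n p)).

Lemma final_pair V f i j a b c : 0 < V -> in_F f -> (i < 5)%nat -> (j < 5)%nat ->
  (forall m n p, / 12 * lsum G12 (fun m n p => qi i m n p * qi j m n p) m n p = a * Rq m n p ^ 2 + b * Tq m n p) ->
  (forall m n p, / 12 * lsum G12 (qij i j) m n p = c * Rq m n p) ->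
  second_partial (Ef V f) D3pt i j (Cvol V ^ 2 * (a * S1v V f + b * S3v V f) + Cvol V * (c * S2v V f)).
Proof.
  intros HV Hf Hi Hj H1 H2. unfold S1v, S2v, S3v. rewrite <- (F2_value V f i j a b c HV Hf Hi Hj H1 H2).
  apply step3; auto.
Qed.

Lemma sp_val F a i j v v' : second_partial F a i j v -> v = v' -> second_partial F a i j v'.
Proof. intros H ->; exact H. Qed.

Lemma pair_00 V f : 0 < V -> in_F f ->
  second_partial (Ef V f) D3pt 0 0 (Cvol V ^ 2 * ((1/2) * S1v V f + (6) * S3v V f) + Cvol V * ((2) * S2v V f)).
Proof. intros HV Hf. apply final_pair; [exact HV|exact Hf|lia|lia|polyid|polyid]. Qed.
Lemma pair_01 V f : 0 < V -> in_F f ->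
  second_partial (Ef V f) D3pt 0 1 (Cvol V ^ 2 * ((-1/2) * S1v V f + (-6) * S3v V f) + Cvol V * ((-2) * S2v V f)).
Proof. intros HV Hf. apply final_pair; [exact HV|exact Hf|lia|lia|polyid|polyid]. Qed.
Lemma pair_02 V f : 0 < V -> in_F f ->
  second_partial (Ef V f) D3pt 0 2 (Cvol V ^ 2 * ((0) * S1v V f + (0) * S3v V f) + Cvol V * ((0) * S2v V f)).
Proof. intros HV Hf. apply final_pair; [exact HV|exact Hf|lia|lia|polyid|polyid]. Qed.
Lemma pair_03 V f : 0 < V -> in_F f ->
  second_partial (Ef V f) D3pt 0 3 (Cvol V ^ 2 * ((0) * S1v V f + (0) * S3v V f) + Cvol V * ((0) * S2v V f)).
Proof. intros HV Hf. apply final_pair; [exact HV|exact Hf|lia|lia|polyid|polyid]. Qed.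
Lemma pair_04 V f : 0 < V -> in_F f ->
  second_partial (Ef V f) D3pt 0 4 (Cvol V ^ 2 * ((0) * S1v V f + (0) * S3v V f) + Cvol V * ((0) * S2v V f)).
Proof. intros HV Hf. apply final_pair; [exact HV|exact Hf|lia|lia|polyid|polyid]. Qed.
Lemma pair_10 V f : 0 < V -> in_F f ->
  second_partial (Ef V f) D3pt 1 0 (Cvol V ^ 2 * ((-1/2) * S1v V f + (-6) * S3v V f) + Cvol V * ((-2) * S2v V f)).
Proof. intros HV Hf. apply final_pair; [exact HV|exact Hf|lia|lia|polyid|polyid]. Qed.
Lemma pair_11 V f : 0 < V -> in_F f ->
  second_partial (Ef V f) D3pt 1 1 (Cvol V ^ 2 * ((5/6) * S1v V f + (14/3) * S3v V f) + Cvol V * ((8/3) * S2v V f)).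
Proof. intros HV Hf. apply final_pair; [exact HV|exact Hf|lia|lia|polyid|polyid]. Qed.
Lemma pair_12 V f : 0 < V -> in_F f ->
  second_partial (Ef V f) D3pt 1 2 (Cvol V ^ 2 * ((0) * S1v V f + (0) * S3v V f) + Cvol V * ((0) * S2v V f)).
Proof. intros HV Hf. apply final_pair; [exact HV|exact Hf|lia|lia|polyid|polyid]. Qed.
Lemma pair_13 V f : 0 < V -> in_F f ->
  second_partial (Ef V f) D3pt 1 3 (Cvol V ^ 2 * ((0) * S1v V f + (0) * S3v V f) + Cvol V * ((0) * S2v V f)).
Proof. intros HV Hf. apply final_pair; [exact HV|exact Hf|lia|lia|polyid|polyid]. Qed.
Lemma pair_14 V f : 0 < V -> in_F f ->
  second_partial (Ef V f) D3pt 1 4 (Cvol V ^ 2 * ((0) * S1v V f + (0) * S3v V f) + Cvol V * ((0) * S2v V f)).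
Proof. intros HV Hf. apply final_pair; [exact HV|exact Hf|lia|lia|polyid|polyid]. Qed.
Lemma pair_20 V f : 0 < V -> in_F f ->
  second_partial (Ef V f) D3pt 2 0 (Cvol V ^ 2 * ((0) * S1v V f + (0) * S3v V f) + Cvol V * ((0) * S2v V f)).
Proof. intros HV Hf. apply final_pair; [exact HV|exact Hf|lia|lia|polyid|polyid]. Qed.
Lemma pair_21 V f : 0 < V -> in_F f ->
  second_partial (Ef V f) D3pt 2 1 (Cvol V ^ 2 * ((0) * S1v V f + (0) * S3v V f) + Cvol V * ((0) * S2v V f)).
Proof. intros HV Hf. apply final_pair; [exact HV|exact Hf|lia|lia|polyid|polyid]. Qed.
Lemma pair_22 V f : 0 < V -> in_F f ->
  second_partial (Ef V f) D3pt 2 2 (Cvol V ^ 2 * ((1/3) * S1v V f + (4/3) * S3v V f) + Cvol V * ((1) * S2v V f)).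
Proof. intros HV Hf. apply final_pair; [exact HV|exact Hf|lia|lia|polyid|polyid]. Qed.
Lemma pair_23 V f : 0 < V -> in_F f ->
  second_partial (Ef V f) D3pt 2 3 (Cvol V ^ 2 * ((-1/3) * S1v V f + (4/3) * S3v V f) + Cvol V * ((-2/3) * S2v V f)).
Proof. intros HV Hf. apply final_pair; [exact HV|exact Hf|lia|lia|polyid|polyid]. Qed.
Lemma pair_24 V f : 0 < V -> in_F f ->
  second_partial (Ef V f) D3pt 2 4 (Cvol V ^ 2 * ((0) * S1v V f + (0) * S3v V f) + Cvol V * ((0) * S2v V f)).
Proof. intros HV Hf. apply final_pair; [exact HV|exact Hf|lia|lia|polyid|polyid]. Qed.
Lemma pair_30 V f : 0 < V -> in_F f ->
  second_partial (Ef V f) D3pt 3 0 (Cvol V ^ 2 * ((0) * S1v V f + (0) * S3v V f) + Cvol V * ((0) * S2v V f)).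
Proof. intros HV Hf. apply final_pair; [exact HV|exact Hf|lia|lia|polyid|polyid]. Qed.
Lemma pair_31 V f : 0 < V -> in_F f ->
  second_partial (Ef V f) D3pt 3 1 (Cvol V ^ 2 * ((0) * S1v V f + (0) * S3v V f) + Cvol V * ((0) * S2v V f)).
Proof. intros HV Hf. apply final_pair; [exact HV|exact Hf|lia|lia|polyid|polyid]. Qed.
Lemma pair_32 V f : 0 < V -> in_F f ->
  second_partial (Ef V f) D3pt 3 2 (Cvol V ^ 2 * ((-1/3) * S1v V f + (4/3) * S3v V f) + Cvol V * ((-2/3) * S2v V f)).
Proof. intros HV Hf. apply final_pair; [exact HV|exact Hf|lia|lia|polyid|polyid]. Qed.
Lemma pair_33 V f : 0 < V -> in_F f ->
  second_partial (Ef V f) D3pt 3 3 (Cvol V ^ 2 * ((2/3) * S1v V f + (-8/3) * S3v V f) + Cvol V * ((4/3) * S2v V f)).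
Proof. intros HV Hf. apply final_pair; [exact HV|exact Hf|lia|lia|polyid|polyid]. Qed.
Lemma pair_34 V f : 0 < V -> in_F f ->
  second_partial (Ef V f) D3pt 3 4 (Cvol V ^ 2 * ((0) * S1v V f + (0) * S3v V f) + Cvol V * ((0) * S2v V f)).
Proof. intros HV Hf. apply final_pair; [exact HV|exact Hf|lia|lia|polyid|polyid]. Qed.
Lemma pair_40 V f : 0 < V -> in_F f ->
  second_partial (Ef V f) D3pt 4 0 (Cvol V ^ 2 * ((0) * S1v V f + (0) * S3v V f) + Cvol V * ((0) * S2v V f)).
Proof. intros HV Hf. apply final_pair; [exact HV|exact Hf|lia|lia|polyid|polyid]. Qed.
Lemma pair_41 V f : 0 < V -> in_F f ->
  second_partial (Ef V f) D3pt 4 1 (Cvol V ^ 2 * ((0) * S1v V f + (0) * S3v V f) + Cvol V * ((0) * S2v V f)).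
Proof. intros HV Hf. apply final_pair; [exact HV|exact Hf|lia|lia|polyid|polyid]. Qed.
Lemma pair_42 V f : 0 < V -> in_F f ->
  second_partial (Ef V f) D3pt 4 2 (Cvol V ^ 2 * ((0) * S1v V f + (0) * S3v V f) + Cvol V * ((0) * S2v V f)).
Proof. intros HV Hf. apply final_pair; [exact HV|exact Hf|lia|lia|polyid|polyid]. Qed.
Lemma pair_43 V f : 0 < V -> in_F f ->
  second_partial (Ef V f) D3pt 4 3 (Cvol V ^ 2 * ((0) * S1v V f + (0) * S3v V f) + Cvol V * ((0) * S2v V f)).
Proof. intros HV Hf. apply final_pair; [exact HV|exact Hf|lia|lia|polyid|polyid]. Qed.
Lemma pair_44 V f : 0 < V -> in_F f ->
  second_partial (Ef V f) D3pt 4 4 (Cvol V ^ 2 * ((2/3) * S1v V f + (-8/3) * S3v V f) + Cvol V * ((4/3) * S2v V f)).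
Proof. intros HV Hf. apply final_pair; [exact HV|exact Hf|lia|lia|polyid|polyid]. Qed.

Ltac finish_pair := match goal with |- second_partial _ _ ?i ?j _ =>
  eapply sp_val; [lazymatch constr:((i, j)) with
    | (0, 0)%nat => apply pair_00
    | (0, 1)%nat => apply pair_01
    | (0, 2)%nat => apply pair_02
    | (0, 3)%nat => apply pair_03
    | (0, 4)%nat => apply pair_04
    | (1, 0)%nat => apply pair_10
    | (1, 1)%nat => apply pair_11
    | (1, 2)%nat => apply pair_12
    | (1, 3)%nat => apply pair_13
    | (1, 4)%nat => apply pair_14
    | (2, 0)%nat => apply pair_20
    | (2, 1)%nat => apply pair_21
    | (2, 2)%nat => apply pair_22
    | (2, 3)%nat => apply pair_23
    | (2, 4)%nat => apply pair_24
    | (3, 0)%nat => apply pair_30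
    | (3, 1)%nat => apply pair_31
    | (3, 2)%nat => apply pair_32
    | (3, 3)%nat => apply pair_33
    | (3, 4)%nat => apply pair_34
    | (4, 0)%nat => apply pair_40
    | (4, 1)%nat => apply pair_41
    | (4, 2)%nat => apply pair_42
    | (4, 3)%nat => apply pair_43
    | (4, 4)%nat => apply pair_44
    end; assumption |]; unfold S1v, S2v, S3v; field end.

(* indices: 0 = u, 1 = v, 2 = x, 3 = y, 4 = z *)
Theorem proposition4p2 (V : R) (f : R -> R) (hV : 0 < V) (hf : in_F f) :
  let C : R := Cvol V in
  let E : (nat -> R) -> R := Ef V f in
  let S1 : R := lattice_sum (fun m n p => Rq m n p ^ 2 * Derive (Derive f) (C * Rq m n p)) in
  let S2 : R := lattice_sum (fun m n p => Rq m n p * Derive f (C * Rq m n p)) in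
  let S3 : R := lattice_sum (fun m n p => Tq m n p * Derive (Derive f) (C * Rq m n p)) in
  second_partial E D3pt 0 0 (C ^ 2 / 2 * S1 + 2 * C * S2 + 6 * C ^ 2 * S3) /\
  second_partial E D3pt 1 1 (5 / 6 * C ^ 2 * S1 + 8 / 3 * C * S2 + 14 / 3 * C ^ 2 * S3) /\
  second_partial E D3pt 2 2 (C ^ 2 / 3 * S1 + C * S2 + 4 / 3 * C ^ 2 * S3) /\
  second_partial E D3pt 3 3 (2 / 3 * C ^ 2 * S1 + 4 / 3 * C * S2 - 8 / 3 * C ^ 2 * S3) /\
  second_partial E D3pt 4 4 (2 / 3 * C ^ 2 * S1 + 4 / 3 * C * S2 - 8 / 3 * C ^ 2 * S3) /\
  (forall i j : nat, (i, j) = (0, 1)%nat \/ (i, j) = (1, 0)%nat ->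
     second_partial E D3pt i j (- (C ^ 2 / 2) * S1 - 2 * C * S2 - 6 * C ^ 2 * S3)) /\
  (forall i j : nat, (i, j) = (2, 3)%nat \/ (i, j) = (3, 2)%nat ->
     second_partial E D3pt i j (- (C ^ 2 / 3) * S1 - 2 * C / 3 * S2 + 4 * C ^ 2 / 3 * S3)) /\
  (forall i j : nat,
     In (i, j) [(0,2); (0,3); (0,4); (1,2); (1,3); (1,4); (2,4); (3,4)]%nat \/
     In (j, i) [(0,2); (0,3); (0,4); (1,2); (1,3); (1,4); (2,4); (3,4)]%nat ->
     second_partial E D3pt i j 0).
Proof.
  intros C E S1 S2 S3. subst C E S1 S2 S3.
  split; [finish_pair|]. split; [finish_pair|]. split; [finish_pair|].
  split; [finish_pair|]. split; [finish_pair|].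
  split; [intros i j [H|H]; injection H; intros; subst; finish_pair|].
  split; [intros i j [H|H]; injection H; intros; subst; finish_pair|].
  intros i j [H|H]; simpl in H;
    repeat (destruct H as [H|H]; [injection H; intros; subst; finish_pair|]); contradiction.
Qed.
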